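(* Let $\epsilon>0$ and let $(Q,K)$, $c(K)$ and $Y=t\,c'(K)\partial_Q-\partial_K$ be as described in the context. Let $\bar f(t,Q,K)$ be a solution of $$\partial_t\bar f - c(K)\,\partial_Q\bar f = 0$$ on $[0,\infty)\times(\mathbb{R}/2\pi\mathbb{Z})\times(0,\infty)$, whose initial data, expressed in $(x,v)$ variables as $f_0(x,v)=\bar f(0,Q,K)$, is smooth, nonnegative, and satisfies $\mathrm{supp}(f_0)\subseteq\{(x,v): c_s\leq \frac{v^2}{2}+\Phi(x)\leq c_s^{-1}\}$ for some $c_s>0$. Then $$\sup_{(t,Q,K)\in[0,\infty)\times\mathbb{T}^1\times[c_s,c_s^{-1}]}\ \sum_{\ell\leq 2}|Y^\ell\bar f|(t,Q,K)\lesssim \sup_{(x,v)\in\mathbb{R}\times\mathbb{R}}\ \sum_{|\alpha|+|\beta|\leq 2}|\partial_x^\alpha\partial_v^\beta f_0|(x,v),$$ where the implicit constant depends only on $\epsilon$ and $c_s$.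
   Context: Let $\Phi(x)=\frac{x^2}{2}+\frac{\epsilon x^4}{2}$ and $H(x,v)=\frac{v^2}{2}+\Phi(x)$. For $(x,v)\neq(0,0)$ define the angle $\chi\in\mathbb{R}/2\pi\mathbb{Z}$ by $\chi=\arcsin\big(v/\sqrt{2H}\big)$ if $x>0$ and $\chi=\pi-\arcsin\big(v/\sqrt{2H}\big)$ if $x\leq 0$; then $(x,v)\mapsto(\chi,H)$ is a bijection onto $(\mathbb{R}/2\pi\mathbb{Z})\times(0,\infty)$, and we write $x=x(\chi,H)$. Set $a(\chi,H)=\sqrt{2}\,\frac{1+2\epsilon x^2}{\sqrt{1+\epsilon x^2}}$ with $x=x(\chi,H)$. Define $c(H)>0$ by $c(H)\int_0^{2\pi}\frac{\mathrm{d}\chi}{a(\chi,H)}=2\pi$, and $Q(\chi,H)=c(H)\int_0^{\chi}\frac{\mathrm{d}\chi'}{a(\chi',H)}$ (well defined modulo $2\pi$), $K=H$. $\mathbb{T}^1=\mathbb{R}/2\pi\mathbb{Z}$. Partial derivatives $\partial_Q,\partial_K$ are taken in the coordinates $(t,Q,K)$. *)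

(* Defs.v *)
From Stdlib Require Import Reals Lra List ClassicalEpsilon.
From Coquelicot Require Import Coquelicot.
Open Scope R_scope.

Definition Phi (eps x : R) : R := x ^ 2 / 2 + eps * x ^ 4 / 2.
Definition Hen (eps x v : R) : R := v ^ 2 / 2 + Phi eps x.

(* the angle chi(x,v), as a real representative of its class mod 2 pi *)
Definition chi (eps x v : R) : R :=
  if Rlt_dec 0 x then asin (v / sqrt (2 * Hen eps x v))
  else PI - asin (v / sqrt (2 * Hen eps x v)).

Definition eq_mod2pi (a b : R) : Prop := exists k : Z, a = b + 2 * PI * IZR k.

Definition x_of (eps ch H : R) : R :=
  epsilon (inhabits 0)
    (fun x => exists v, (x, v) <> (0, 0) /\ Hen eps x v = H /\ eq_mod2pi (chi eps x v) ch).

Definition a_fun (eps ch H : R) : R :=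
  let x := x_of eps ch H in sqrt 2 * (1 + 2 * eps * x ^ 2) / sqrt (1 + eps * x ^ 2).

Definition c_fun (eps H : R) : R :=
  2 * PI / RInt (fun ch => / a_fun eps ch H) 0 (2 * PI).

Definition Q_fun (eps ch H : R) : R :=
  c_fun eps H * RInt (fun ch' => / a_fun eps ch' H) 0 ch.

Definition Q_of (eps x v : R) : R := Q_fun eps (chi eps x v) (Hen eps x v).
Definition K_of (eps x v : R) : R := Hen eps x v.

Definition Yop (eps : R) (g : R -> R -> R -> R) : R -> R -> R -> R :=
  fun t Q K => t * Derive (c_fun eps) K * Derive (fun q => g t q K) Q
               - Derive (fun k => g t Q k) K.

Definition dx (f : R -> R -> R) : R -> R -> R := fun x v => Derive (fun y => f y v) x.
Definition dv (f : R -> R -> R) : R -> R -> R := fun x v => Derive (fun w => f x w) v.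

(* iterated partial derivative along a word of directions (true = x, false = v) *)
Fixpoint pder (w : list bool) (f : R -> R -> R) : R -> R -> R :=
  match w with
  | nil => f
  | b :: w' => if b then dx (pder w' f) else dv (pder w' f)
  end.

Definition smooth2 (f : R -> R -> R) : Prop :=
  forall w : list bool, forall x v,
    ex_derive (fun y => pder w f y v) x /\ ex_derive (fun u => pder w f x u) v /\
    continuity_2d_pt (pder w f) x v.

Definition C2sum (f : R -> R -> R) (x v : R) : R :=
  Rabs (f x v) + Rabs (dx f x v) + Rabs (dv f x v)
  + Rabs (dx (dx f) x v) + Rabs (dx (dv f) x v) + Rabs (dv (dv f) x v).

(* Main.v *)
Require Import Defs.
From Stdlib Require Import Reals Lra ZArith Lia ClassicalEpsilon List FunctionalExtensionality.
From Coquelicot Require Import Coquelicot.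
Open Scope R_scope.

Fixpoint Sm (n : nat) (U : R -> R -> Prop) (f : R -> R -> R) : Prop :=
  match n with
  | O => forall x y, U x y -> continuity_2d_pt f x y
  | S n => exists f1 f2 : R -> R -> R,
      (forall x y, U x y -> differentiable_pt_lim f x y (f1 x y) (f2 x y))
      /\ Sm n U f1 /\ Sm n U f2
  end.

Lemma Sm_cont n U f : Sm n U f -> forall x y, U x y -> continuity_2d_pt f x y.
Proof.
  destruct n as [|n]; simpl; auto.
  intros (f1 & f2 & H & _) x y Hu. apply differentiable_continuity_pt.
  exists (f1 x y), (f2 x y); auto.
Qed.

Lemma Sm_mono n : forall U f, Sm (S n) U f -> Sm n U f.
Proof.
  induction n as [|n IH]; intros U f H.
  - exact (Sm_cont 1 U f H).
  - destruct H as (f1 & f2 & Hd & H1 & H2). exists f1, f2; split; [|split]; auto.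
Qed.

Lemma Sm_le n m U f : (m <= n)%nat -> Sm n U f -> Sm m U f.
Proof.
  induction 1; auto. intros H0; apply IHle, Sm_mono, H0.
Qed.

Lemma cont_comp (f u w : R -> R -> R) x y :
  continuity_2d_pt f (u x y) (w x y) -> continuity_2d_pt u x y ->
  continuity_2d_pt w x y -> continuity_2d_pt (fun a b => f (u a b) (w a b)) x y.
Proof.
  intros Hf Hu Hw eps. destruct (Hf eps) as [d Hd].
  apply locally_2d_impl with (P := fun a b => Rabs (u a b - u x y) < d /\ Rabs (w a b - w x y) < d).
  - apply locally_2d_forall. intros a b [H1 H2]. apply Hd; auto.
  - apply locally_2d_and; [apply Hu|apply Hw].
Qed.

Lemma dpl_const c x y : differentiable_pt_lim (fun _ _ => c) x y 0 0.
Proof.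
  intros eps. apply locally_2d_forall. intros u v.
  replace (c - c - (0 * (u - x) + 0 * (v - y))) with 0 by ring.
  rewrite Rabs_R0. apply Rmult_le_pos. apply Rlt_le, cond_pos.
  apply Rle_trans with (Rabs (u - x)). apply Rabs_pos. apply Rmax_l.
Qed.

Lemma dpl_p1 x y : differentiable_pt_lim (fun a _ => a) x y 1 0.
Proof.
  intros eps. apply locally_2d_forall. intros u v.
  replace (u - x - (1 * (u - x) + 0 * (v - y))) with 0 by ring.
  rewrite Rabs_R0. apply Rmult_le_pos. apply Rlt_le, cond_pos.
  apply Rle_trans with (Rabs (u - x)). apply Rabs_pos. apply Rmax_l.
Qed.

Lemma dpl_p2 x y : differentiable_pt_lim (fun _ b => b) x y 0 1.
Proof.
  intros eps. apply locally_2d_forall. intros u v.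
  replace (v - y - (0 * (u - x) + 1 * (v - y))) with 0 by ring.
  rewrite Rabs_R0. apply Rmult_le_pos. apply Rlt_le, cond_pos.
  apply Rle_trans with (Rabs (u - x)). apply Rabs_pos. apply Rmax_l.
Qed.

Lemma dpl_add x y : differentiable_pt_lim (fun a b => a + b) x y 1 1.
Proof.
  intros eps. apply locally_2d_forall. intros u v.
  replace (u + v - (x + y) - (1 * (u - x) + 1 * (v - y))) with 0 by ring.
  rewrite Rabs_R0. apply Rmult_le_pos. apply Rlt_le, cond_pos.
  apply Rle_trans with (Rabs (u - x)). apply Rabs_pos. apply Rmax_l.
Qed.

Lemma dpl_mul x y : differentiable_pt_lim (fun a b => a * b) x y y x.
Proof.
  intros eps. exists eps. intros u v Hu Hv.
  replace (u * v - x * y - (y * (u - x) + x * (v - y))) with ((u - x) * (v - y)) by ring.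
  rewrite Rabs_mult.
  apply Rmult_le_compat; try apply Rabs_pos.
  - apply Rlt_le, Rle_lt_trans with (Rabs (u-x)). apply Rle_refl. auto.
  - apply Rmax_r.
Qed.

Lemma dpl_1d (phi : R -> R) x y l : derivable_pt_lim phi x l ->
  differentiable_pt_lim (fun a _ => phi a) x y l 0.
Proof. apply differentiable_pt_lim_proj1_0. Qed.

Lemma Sm_const n U c : Sm n U (fun _ _ => c).
Proof.
  revert c; induction n; intro c; simpl.
  - intros; apply continuity_2d_pt_const.
  - exists (fun _ _ => 0), (fun _ _ => 0). split; [|split]; auto.
    intros; apply dpl_const.
Qed.

Lemma Sm_p1 n U : Sm n U (fun a _ => a).
Proof.
  destruct n; simpl.
  - intros; apply continuity_2d_pt_id1.
  - exists (fun _ _ => 1), (fun _ _ => 0). split; [|split]; try apply Sm_const.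
    intros; apply dpl_p1.
Qed.

Lemma Sm_p2 n U : Sm n U (fun _ b => b).
Proof.
  destruct n; simpl.
  - intros; apply continuity_2d_pt_id2.
  - exists (fun _ _ => 0), (fun _ _ => 1). split; [|split]; try apply Sm_const.
    intros; apply dpl_p2.
Qed.

Lemma Sm_add_f n U : Sm n U (fun a b => a + b).
Proof.
  destruct n; simpl.
  - intros. apply continuity_2d_pt_plus; [apply continuity_2d_pt_id1|apply continuity_2d_pt_id2].
  - exists (fun _ _ => 1), (fun _ _ => 1). split; [|split]; try apply Sm_const.
    intros; apply dpl_add.
Qed.

Lemma Sm_mul_f n U : Sm n U (fun a b => a * b).
Proof.
  destruct n; simpl.
  - intros. apply continuity_2d_pt_mult; [apply continuity_2d_pt_id1|apply continuity_2d_pt_id2].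
  - exists (fun _ b => b), (fun a _ => a). split; [|split]; try apply Sm_p1; try apply Sm_p2.
    intros; apply dpl_mul.
Qed.

Lemma Sm_comp n : forall U V f u w, Sm n U f -> Sm n V u -> Sm n V w ->
  (forall x y, V x y -> U (u x y) (w x y)) ->
  Sm n V (fun x y => f (u x y) (w x y)).
Proof.
  induction n as [|n IH]; intros U V f u w Hf Hu Hw HUV.
  - simpl in *. intros x y Hv. apply cont_comp; auto.
  - destruct Hf as (f1 & f2 & Df & Hf1 & Hf2).
    destruct Hu as (u1 & u2 & Du & Hu1 & Hu2).
    destruct Hw as (w1 & w2 & Dw & Hw1 & Hw2).
    assert (Hu' : Sm n V u) by (apply Sm_mono; exists u1, u2; auto).
    assert (Hw' : Sm n V w) by (apply Sm_mono; exists w1, w2; auto).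
    exists (fun x y => f1 (u x y) (w x y) * u1 x y + f2 (u x y) (w x y) * w1 x y),
           (fun x y => f1 (u x y) (w x y) * u2 x y + f2 (u x y) (w x y) * w2 x y).
    split; [|split].
    + intros x y Hv. apply differentiable_pt_lim_comp; auto.
    + apply (IH (fun _ _ => True) V (fun a b => a + b)); auto using Sm_add_f.
      * apply (IH (fun _ _ => True) V (fun a b => a * b)); auto using Sm_mul_f.
        apply (IH U V f1); auto.
      * apply (IH (fun _ _ => True) V (fun a b => a * b)); auto using Sm_mul_f.
        apply (IH U V f2); auto.
    + apply (IH (fun _ _ => True) V (fun a b => a + b)); auto using Sm_add_f.
      * apply (IH (fun _ _ => True) V (fun a b => a * b)); auto using Sm_mul_f.
        apply (IH U V f1); auto.
      * apply (IH (fun _ _ => True) V (fun a b => a * b)); auto using Sm_mul_f.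
        apply (IH U V f2); auto.
Qed.

Lemma Sm_plus n V A B : Sm n V A -> Sm n V B -> Sm n V (fun x y => A x y + B x y).
Proof. intros; apply (Sm_comp n (fun _ _ => True) V (fun a b => a + b)); auto using Sm_add_f. Qed.
Lemma Sm_mult n V A B : Sm n V A -> Sm n V B -> Sm n V (fun x y => A x y * B x y).
Proof. intros; apply (Sm_comp n (fun _ _ => True) V (fun a b => a * b)); auto using Sm_mul_f. Qed.
Lemma Sm_ext n V A B : (forall x y, A x y = B x y) -> Sm n V A -> Sm n V B.
Proof.
  intros E. replace B with A; auto. apply functional_extensionality; intro x.
  apply functional_extensionality; intro y. auto.
Qed.
Lemma Sm_opp n V A : Sm n V A -> Sm n V (fun x y => - A x y).
Proof.
  intros H. apply Sm_ext with (fun x y => (-1) * A x y). intros; ring.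
  apply Sm_mult; auto using Sm_const.
Qed.
Lemma Sm_minus n V A B : Sm n V A -> Sm n V B -> Sm n V (fun x y => A x y - B x y).
Proof. intros; apply Sm_plus; auto using Sm_opp. Qed.
Lemma Sm_pow n V A k : Sm n V A -> Sm n V (fun x y => A x y ^ k).
Proof. intros H; induction k; simpl. apply Sm_const. apply Sm_mult; auto. Qed.

Lemma dpl_1d' (phi : R -> R) x y l : is_derive phi x l ->
  differentiable_pt_lim (fun a _ => phi a) x y l 0.
Proof. intros H; apply dpl_1d, is_derive_Reals, H. Qed.

Lemma Sm_inv_base n : Sm n (fun a _ => 0 < a) (fun a _ => / a).
Proof.
  assert (D : forall x y, 0 < x -> differentiable_pt_lim (fun a _ => / a) x y (-(/x * /x)) 0).
  { intros x y Hx. apply dpl_1d'. auto_derive. lra. field. lra. }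
  induction n.
  - simpl. intros x y Hx. apply differentiable_continuity_pt. do 2 eexists; apply D; auto.
  - exists (fun a _ => -(/a * /a)), (fun _ _ => 0). split; [|split].
    + intros; apply D; auto.
    + apply Sm_opp, Sm_mult; auto.
    + apply Sm_const.
Qed.

Lemma Sm_inv n V A : Sm n V A -> (forall x y, V x y -> 0 < A x y) -> Sm n V (fun x y => / A x y).
Proof.
  intros H P. apply (Sm_comp n (fun a _ => 0 < a) V (fun a _ => / a) A A); auto using Sm_inv_base.
Qed.

Lemma Sm_sqrt_base n : Sm n (fun a _ => 0 < a) (fun a _ => sqrt a).
Proof.
  assert (D : forall x y, 0 < x -> differentiable_pt_lim (fun a _ => sqrt a) x y (/ (2 * sqrt x)) 0).
  { intros x y Hx. apply dpl_1d. apply derivable_pt_lim_sqrt; auto. }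
  induction n.
  - simpl. intros x y Hx. apply differentiable_continuity_pt. do 2 eexists; apply D; auto.
  - exists (fun a _ => / (2 * sqrt a)), (fun _ _ => 0). split; [|split].
    + intros; apply D; auto.
    + apply Sm_inv. apply Sm_mult; auto using Sm_const.
      intros x y Hx. simpl in Hx. apply Rmult_lt_0_compat. lra. apply sqrt_lt_R0; auto.
    + apply Sm_const.
Qed.

Lemma Sm_sqrt n V A : Sm n V A -> (forall x y, V x y -> 0 < A x y) -> Sm n V (fun x y => sqrt (A x y)).
Proof.
  intros H P. apply (Sm_comp n (fun a _ => 0 < a) V (fun a _ => sqrt a) A A); auto using Sm_sqrt_base.
Qed.

Lemma Sm_cossin_base n U : Sm n U (fun a _ => cos a) /\ Sm n U (fun a _ => sin a).
Proof.
  assert (Dc : forall x y, differentiable_pt_lim (fun a _ => cos a) x y (- sin x) 0).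
  { intros x y. apply dpl_1d. apply derivable_pt_lim_cos. }
  assert (Ds : forall x y, differentiable_pt_lim (fun a _ => sin a) x y (cos x) 0).
  { intros x y. apply dpl_1d. apply derivable_pt_lim_sin. }
  induction n as [|n [IHc IHs]].
  - simpl. split; intros x y _; apply differentiable_continuity_pt; do 2 eexists; eauto.
  - split.
    + exists (fun a _ => - sin a), (fun _ _ => 0). split; [|split]; auto using Sm_const, Sm_opp.
    + exists (fun a _ => cos a), (fun _ _ => 0). split; [|split]; auto using Sm_const.
Qed.

Lemma Sm_cos n V A : Sm n V A -> Sm n V (fun x y => cos (A x y)).
Proof.
  intros H. apply (Sm_comp n (fun _ _ => True) V (fun a _ => cos a) A A); auto.
  apply Sm_cossin_base.
Qed.
Lemma Sm_sin n V A : Sm n V A -> Sm n V (fun x y => sin (A x y)).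
Proof.
  intros H. apply (Sm_comp n (fun _ _ => True) V (fun a _ => sin a) A A); auto.
  apply Sm_cossin_base.
Qed.

Ltac smt1 :=
  match goal with
  | |- Sm _ _ (fun x y => @?A x y + @?B x y) => apply Sm_plus
  | |- Sm _ _ (fun x y => @?A x y - @?B x y) => apply Sm_minus
  | |- Sm _ _ (fun x y => @?A x y * @?B x y) => apply Sm_mult
  | |- Sm _ _ (fun x y => @?A x y / @?B x y) => apply Sm_mult
  | |- Sm _ _ (fun x y => - @?A x y) => apply Sm_opp
  | |- Sm _ _ (fun x y => @?A x y ^ _) => apply Sm_pow
  | |- Sm _ _ (fun x y => cos (@?A x y)) => apply Sm_cos
  | |- Sm _ _ (fun x y => sin (@?A x y)) => apply Sm_sin
  | |- Sm _ _ (fun x y => / (@?A x y)) => apply Sm_inv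
  | |- Sm _ _ (fun x y => sqrt (@?A x y)) => apply Sm_sqrt
  | |- Sm _ _ (fun x y => x) => apply Sm_p1
  | |- Sm _ _ (fun x y => y) => apply Sm_p2
  | |- Sm _ _ (fun x y => _) => apply Sm_const
  end.
Ltac smt := try (smt1; smt).


Lemma derive_bound (f : R -> R) x l : is_derive f x l ->
  forall eps : posreal, exists d : posreal, forall v, Rabs (v - x) < d ->
   Rabs (f v - f x - l * (v - x)) <= eps * Rabs (v - x).
Proof.
  intros H eps. apply is_derive_Reals in H. destruct (H eps (cond_pos eps)) as [d Hd].
  exists d. intros v Hv. destruct (Req_dec v x) as [E|E].
  - subst. replace (f x - f x - l * (x - x)) with 0 by ring. rewrite Rabs_R0, Rminus_eq_0, Rabs_R0. lra.
  - assert (Hh : v - x <> 0) by lra. specialize (Hd (v - x) Hh Hv).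
    replace (x + (v - x)) with v in Hd by ring.
    replace (f v - f x - l * (v - x)) with (((f v - f x) / (v - x) - l) * (v - x)) by (field; auto).
    rewrite Rabs_mult. apply Rmult_le_compat_r. apply Rabs_pos. lra.
Qed.

Lemma cpl (f p1 : R -> R -> R) x y l2 :
  locally_2d (fun u v => is_derive (fun z => f z v) u (p1 u v)) x y ->
  continuity_2d_pt p1 x y -> is_derive (fun z => f x z) y l2 ->
  differentiable_pt_lim f x y (p1 x y) l2.
Proof.
  intros [d0 Hd0] Hc Hy eps.
  assert (e2 : 0 < eps / 2) by (destruct eps; simpl; lra).
  destruct (Hc (mkposreal _ e2)) as [d1 Hd1].
  destruct (derive_bound _ _ _ Hy (mkposreal _ e2)) as [d2 Hd2].
  assert (dp : 0 < Rmin d0 (Rmin d1 d2)) by (destruct d0, d1, d2; simpl; repeat apply Rmin_pos; auto).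
  exists (mkposreal _ dp). simpl. intros u v Hu Hv.
  assert (Hu0 : Rabs (u - x) < d0) by (eapply Rlt_le_trans; [exact Hu| apply Rmin_l]).
  assert (Hv0 : Rabs (v - y) < d0) by (eapply Rlt_le_trans; [exact Hv| apply Rmin_l]).
  assert (Hu1 : Rabs (u - x) < d1) by (eapply Rlt_le_trans; [exact Hu| eapply Rle_trans; [apply Rmin_r|apply Rmin_l]]).
  assert (Hv1 : Rabs (v - y) < d1) by (eapply Rlt_le_trans; [exact Hv| eapply Rle_trans; [apply Rmin_r|apply Rmin_l]]).
  assert (Hv2 : Rabs (v - y) < d2) by (eapply Rlt_le_trans; [exact Hv| eapply Rle_trans; [apply Rmin_r|apply Rmin_r]]).
  destruct (MVT_cor4 (fun z => f z v) (fun z => p1 z v) x (Rabs (u - x))) with (b := u) as [c [Ec Hcx]].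
  { intros c Hc'. apply Hd0; lra. }
  { lra. }
  replace (f u v - f x y - (p1 x y * (u - x) + l2 * (v - y))) with
    ((p1 c v - p1 x y) * (u - x) + (f x v - f x y - l2 * (v - y))) by (rewrite <- (Rplus_0_r (f u v)); lra).
  eapply Rle_trans. apply Rabs_triang. rewrite Rabs_mult.
  assert (A1 : Rabs (p1 c v - p1 x y) < eps / 2) by (apply (Hd1 c v); lra).
  specialize (Hd2 v Hv2). simpl in Hd2.
  assert (M1 := Rmax_l (Rabs (u - x)) (Rabs (v - y))).
  assert (M2 := Rmax_r (Rabs (u - x)) (Rabs (v - y))).
  assert (P1 := Rabs_pos (u - x)). assert (P2 := Rabs_pos (v - y)).
  assert (Rabs (p1 c v - p1 x y) * Rabs (u - x) <= eps / 2 * Rmax (Rabs (u - x)) (Rabs (v - y))).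
  { apply Rmult_le_compat; auto using Rabs_pos; lra. }
  assert (eps / 2 * Rabs (v - y) <= eps / 2 * Rmax (Rabs (u - x)) (Rabs (v - y))).
  { apply Rmult_le_compat_l; lra. }
  lra.
Qed.

Lemma cont_slice1 (f : R -> R -> R) x c : continuity_2d_pt f x c -> continuity_pt (fun z => Rabs (f z c)) x.
Proof.
  intros H. apply continuity_pt_comp with (f1 := fun z => f z c) (f2 := Rabs).
  - intros e He. destruct (H (mkposreal e He)) as [d Hd]. exists d; split. apply cond_pos.
    intros z [_ Hz]. unfold R_dist in *. apply Hd; auto. rewrite Rminus_eq_0, Rabs_R0; apply cond_pos.
  - apply Rcontinuity_abs.
Qed.

Lemma cont_bounded (f : R -> R -> R) a b c d : a <= b -> c <= d ->
  (forall x y, a <= x <= b -> c <= y <= d -> continuity_2d_pt f x y) ->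
  exists B, forall x y, a <= x <= b -> c <= y <= d -> Rabs (f x y) <= B.
Proof.
  intros Hab Hcd Hc.
  destruct (uniform_continuity_2d f a b c d Hc (mkposreal 1 Rlt_0_1)) as [del Hdel]. simpl in Hdel.
  assert (Hd2 : 0 < del / 2) by (destruct del; simpl; lra).
  assert (P : forall N : nat, exists B, forall x y, a <= x <= b -> c <= y <= d -> y <= c + INR N * (del / 2) -> Rabs (f x y) <= B).
  { induction N as [|N [B HB]].
    - destruct (continuity_ab_maj (fun z => Rabs (f z c)) a b Hab) as [m [Hm _]].
      { intros z Hz. apply cont_slice1, Hc; lra. }
      exists (Rabs (f m c)). intros x y Hx Hy Hy'. simpl in Hy'.
      replace y with c by lra. apply Hm; auto.
    - exists (B + 1). intros x y Hx Hy Hy'.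
      destruct (Rle_dec y (c + INR N * (del / 2))) as [Hle|Hlt].
      + specialize (HB x y Hx Hy Hle). lra.
      + apply Rnot_le_lt in Hlt. set (y0 := c + INR N * (del / 2)).
        assert (Hy0 : c <= y0 <= d).
        { split. unfold y0. assert (0 <= INR N * (del/2)) by (apply Rmult_le_pos; [apply pos_INR|lra]). lra. unfold y0; lra. }
        specialize (HB x y0 Hx Hy0 (Rle_refl _)).
        rewrite S_INR in Hy'.
        assert (Rabs (f x y - f x y0) < 1).
        { apply Hdel; auto. rewrite Rminus_eq_0, Rabs_R0; apply cond_pos.
          rewrite Rabs_pos_eq; unfold y0 in *; lra. }
        assert (Rabs (f x y) <= Rabs (f x y - f x y0) + Rabs (f x y0)).
        { replace (f x y) with ((f x y - f x y0) + f x y0) at 1 by ring. apply Rabs_triang. }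
        lra. }
  assert (Hq : 0 <= (d - c) / (del / 2)) by (apply Rdiv_le_0_compat; lra).
  destruct (nfloor_ex _ Hq) as [n [_ Hn]].
  destruct (P (S n)) as [B HB]. exists B. intros x y Hx Hy. apply HB; auto.
  rewrite S_INR. apply Rmult_lt_compat_r with (r := del / 2) in Hn; auto.
  unfold Rdiv at 1 in Hn. rewrite Rmult_assoc, Rinv_l in Hn by lra. lra.
Qed.

Lemma dpl_d2 (f : R -> R -> R) x y lx ly : differentiable_pt_lim f x y lx ly ->
  is_derive (fun z => f x z) y ly.
Proof.
  intros H. apply is_derive_Reals.
  replace ly with (lx * 0 + ly * 1) by ring.
  apply (derivable_pt_lim_comp_2d f (fun _ => x) (fun t => t)); auto.
  apply derivable_pt_lim_const. apply derivable_pt_lim_id.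
Qed.

Lemma dpl_d1 (f : R -> R -> R) x y lx ly : differentiable_pt_lim f x y lx ly ->
  is_derive (fun z => f z y) x lx.
Proof.
  intros H. apply is_derive_Reals.
  replace lx with (lx * 1 + ly * 0) by ring.
  apply (derivable_pt_lim_comp_2d f (fun t => t) (fun _ => y)); auto.
  apply derivable_pt_lim_id. apply derivable_pt_lim_const.
Qed.

Lemma cont_swap (f : R -> R -> R) x y : continuity_2d_pt f x y -> continuity_2d_pt (fun u v => f v u) y x.
Proof.
  intros H eps. destruct (H eps) as [d Hd]. exists d. intros u v Hu Hv. apply Hd; auto.
Qed.

Lemma cont_continuous (f : R -> R -> R) x y : continuity_2d_pt f x y -> continuous (fun z => f z y) x.
Proof.
  intros H. apply continuity_pt_filterlim.
  intros e He. destruct (H (mkposreal e He)) as [d Hd]. exists d; split. apply cond_pos.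
  intros z [_ Hz]. unfold R_dist in *. apply Hd; auto. rewrite Rminus_eq_0, Rabs_R0; apply cond_pos.
Qed.

Lemma abs_RInt_le_const' (f : R -> R) a b M :
  ex_RInt f a b -> (forall t, Rmin a b <= t <= Rmax a b -> Rabs (f t) <= M) ->
  Rabs (RInt f a b) <= Rabs (b - a) * M.
Proof.
  intros Hi Hb. destruct (Rle_dec a b) as [Hab|Hab].
  - rewrite (Rabs_pos_eq (b - a)) by lra. apply abs_RInt_le_const; auto.
    intros t Ht; apply Hb. rewrite Rmin_left, Rmax_right; lra.
  - assert (Hi' : ex_RInt f b a) by (apply ex_RInt_swap; auto).
    assert (E : RInt f a b = - RInt f b a).
    { rewrite <- (opp_RInt_swap f b a Hi'). reflexivity. }
    rewrite E, Rabs_Ropp.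
    rewrite (Rabs_left (b - a)) by lra. replace (- (b - a)) with (a - b) by ring.
    apply abs_RInt_le_const; auto. lra.
    intros t Ht; apply Hb. rewrite Rmin_right, Rmax_left; lra.
Qed.

Definition Upos : R -> R -> Prop := fun _ H => 0 < H.

Definition Psi (k : R -> R -> R) (ch H : R) : R := RInt (fun s => k s H) 0 ch.

Lemma Psi_exRInt (k : R -> R -> R) H a b : 0 < H -> (forall s H, 0 < H -> continuity_2d_pt k s H) ->
  ex_RInt (fun s => k s H) a b.
Proof.
  intros HH Hk. apply (ex_RInt_continuous (V:=R_CompleteNormedModule)). intros z _. apply cont_continuous, Hk; auto.
Qed.

Lemma Psi_cont (k : R -> R -> R) : (forall s H, 0 < H -> continuity_2d_pt k s H) ->
  forall ch H, 0 < H -> continuity_2d_pt (Psi k) ch H.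
Proof.
  intros Hk ch0 H0 HH0 eps.
  set (R0 := Rabs ch0 + 1).
  assert (HR0 : 0 < R0) by (unfold R0; assert (0 <= Rabs ch0) by apply Rabs_pos; lra).
  destruct (cont_bounded k (- R0) R0 (H0 / 2) (2 * H0)) as [B HB]; try lra.
  { intros x y _ Hy. apply Hk. lra. }
  assert (HB0 : 0 <= B) by (eapply Rle_trans; [apply Rabs_pos| apply (HB 0 H0)]; lra).
  assert (e1 : 0 < eps / (2 * R0)) by (apply Rdiv_lt_0_compat; [apply cond_pos| lra]).
  destruct (uniform_continuity_2d k (- R0) R0 (H0 / 2) (2 * H0)) with (eps := mkposreal _ e1) as [d Hd].
  { intros x y _ Hy. apply Hk. lra. }
  simpl in Hd.
  assert (e2 : 0 < Rmin 1 (Rmin (eps / (2 * (B + 1))) (Rmin (H0 / 2) d))).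
  { repeat apply Rmin_pos; try lra. apply Rdiv_lt_0_compat. apply cond_pos. lra. apply cond_pos. }
  exists (mkposreal _ e2). simpl. intros u v Hu Hv.
  assert (Hu1 : Rabs (u - ch0) < 1) by (eapply Rlt_le_trans; [exact Hu|apply Rmin_l]).
  assert (Hu2 : Rabs (u - ch0) < eps / (2 * (B + 1))) by
    (eapply Rlt_le_trans; [exact Hu|eapply Rle_trans; [apply Rmin_r|apply Rmin_l]]).
  assert (Hv1 : Rabs (v - H0) < H0 / 2) by
    (eapply Rlt_le_trans; [exact Hv|eapply Rle_trans; [apply Rmin_r|eapply Rle_trans; [apply Rmin_r|apply Rmin_l]]]).
  assert (Hv2 : Rabs (v - H0) < d) by
    (eapply Rlt_le_trans; [exact Hv|eapply Rle_trans; [apply Rmin_r|eapply Rle_trans; [apply Rmin_r|apply Rmin_r]]]).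
  assert (Hvr : H0 / 2 <= v <= 2 * H0) by (apply Rabs_lt_between' in Hv1; lra).
  assert (Hvp : 0 < v) by lra.
  unfold Psi.
  rewrite <- (RInt_Chasles (fun s => k s v) 0 ch0 u) by (apply Psi_exRInt; auto).
  change (plus ?a ?b) with (a + b).
  replace (RInt (fun s => k s v) 0 ch0 + RInt (fun s => k s v) ch0 u - RInt (fun s => k s H0) 0 ch0)
    with (RInt (fun s => k s v) ch0 u + (RInt (fun s => k s v) 0 ch0 - RInt (fun s => k s H0) 0 ch0)) by ring.
  assert (Hch : Rabs ch0 <= R0 - 1) by (unfold R0; lra).
  assert (Hch' := proj1 (Rabs_le_between _ _) Hch).
  assert (A1 : Rabs (RInt (fun s => k s v) ch0 u) <= Rabs (u - ch0) * B).
  { apply abs_RInt_le_const'. apply Psi_exRInt; auto. intros t Ht. apply HB; [|lra].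
    apply Rabs_lt_between' in Hu1.
    assert (Rmin ch0 u <= t <= Rmax ch0 u) by exact Ht.
    split. eapply Rle_trans; [|apply Ht]. apply Rmin_glb; lra.
    eapply Rle_trans; [apply Ht|]. apply Rmax_lub; lra. }
  assert (A2 : Rabs (RInt (fun s => k s v) 0 ch0 - RInt (fun s => k s H0) 0 ch0) <= Rabs (ch0 - 0) * (eps / (2 * R0))).
  { assert (E := RInt_minus (fun s => k s v) (fun s => k s H0) 0 ch0).
    change (minus ?a ?b) with (a - b) in E. rewrite <- E by (apply Psi_exRInt; auto).
    apply abs_RInt_le_const'.
    { apply (ex_RInt_minus (fun s => k s v) (fun s => k s H0)); apply Psi_exRInt; auto. }
    intros t Ht. change (minus ?a ?b) with (a - b). apply Rlt_le, Hd.
    - split. eapply Rle_trans; [|apply Ht]. apply Rmin_glb; lra.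
      eapply Rle_trans; [apply Ht|]. apply Rmax_lub; lra.
    - lra.
    - split. eapply Rle_trans; [|apply Ht]. apply Rmin_glb; lra.
      eapply Rle_trans; [apply Ht|]. apply Rmax_lub; lra.
    - lra.
    - rewrite Rminus_eq_0, Rabs_R0. apply cond_pos.
    - exact Hv2. }
  eapply Rle_lt_trans. apply Rabs_triang.
  rewrite Rminus_0_r in A2.
  assert (Rabs (u - ch0) * B <= eps / (2 * (B + 1)) * B).
  { apply Rmult_le_compat_r; lra. }
  assert (eps / (2 * (B + 1)) * B < eps / 2).
  { apply Rlt_le_trans with (eps / (2 * (B + 1)) * (B + 1)).
    apply Rmult_lt_compat_l. apply Rdiv_lt_0_compat. apply cond_pos. lra. lra.
    right; field; lra. }
  assert (Rabs ch0 * (eps / (2 * R0)) < eps / 2).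
  { apply Rlt_le_trans with (R0 * (eps / (2 * R0))).
    apply Rmult_lt_compat_r. auto. unfold R0; lra.
    right; field; lra. }
  lra.
Qed.

Lemma locally_pos H : 0 < H -> locally H (fun y => 0 < y).
Proof. intros HH. apply (open_gt 0 H HH). Qed.

Lemma Psi_D2 (k k2 : R -> R -> R) :
  (forall s H, 0 < H -> continuity_2d_pt k s H) ->
  (forall s H, 0 < H -> is_derive (fun z => k s z) H (k2 s H)) ->
  (forall s H, 0 < H -> continuity_2d_pt k2 s H) ->
  forall ch H, 0 < H -> differentiable_pt_lim (Psi k) ch H (k ch H) (Psi k2 ch H).
Proof.
  intros Hk Hk2 Hc2 ch H HH. apply cpl.
  - assert (e : 0 < H / 2) by lra. exists (mkposreal _ e). simpl. intros u v _ Hv.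
    apply Rabs_lt_between' in Hv. assert (Hvp : 0 < v) by lra.
    unfold Psi. apply (is_derive_RInt (fun s => k s v) (fun b => RInt (fun s => k s v) 0 b) 0).
    + apply filter_forall. intros b. apply (RInt_correct (V:=R_CompleteNormedModule)).
      apply Psi_exRInt; auto.
    + apply cont_continuous, Hk; auto.
  - apply Hk; auto.
  - unfold Psi.
    assert (E : RInt (fun s => k2 s H) 0 ch = RInt (fun t => Derive (fun u => k t u) H) 0 ch).
    { apply RInt_ext. intros x _. symmetry. apply is_derive_unique, Hk2; auto. }
    rewrite E.
    apply (is_derive_RInt_param (fun z s => k s z) 0 ch H).
    + apply filter_imp with (2 := locally_pos H HH). intros y Hy t _. eexists; apply Hk2; auto.
    + intros t _. apply cont_swap.
      apply continuity_2d_pt_ext_loc with (f := k2).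
      * assert (e : 0 < H / 2) by lra. exists (mkposreal _ e). simpl. intros u v _ Hv.
        apply Rabs_lt_between' in Hv. symmetry. apply is_derive_unique, Hk2; lra.
      * apply Hc2; auto.
    + apply filter_imp with (2 := locally_pos H HH). intros y Hy. apply Psi_exRInt; auto.
Qed.

Lemma Sm_Psi n : forall k, Sm n Upos k -> Sm n Upos (Psi k).
Proof.
  induction n as [|n IH]; intros k Hk.
  - simpl in *. apply Psi_cont. exact Hk.
  - pose proof (Sm_cont _ _ _ Hk) as Hkc.
    destruct Hk as (k1 & k2 & Dk & Hk1 & Hk2).
    exists k, (Psi k2). split; [|split].
    + intros ch H HH. apply Psi_D2; auto.
      * intros s H0 HH0. apply (dpl_d2 _ _ _ (k1 s H0)), Dk; auto.
      * apply Sm_cont with n; auto.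
    + apply Sm_mono. exists k1, k2; auto.
    + apply IH; auto.
Qed.

Section Conc.
Variable eps : R.
Hypothesis Heps : 0 < eps.

Definition ss (y : R) := sqrt (1 + 8 * eps * y).
Definition rr (y : R) := sqrt (1 + ss y) / (2 * ss y).
Definition kap (s H : R) := sqrt (1 + sqrt (1 + 8 * eps * (H * cos s ^ 2))) / (2 * sqrt (1 + 8 * eps * (H * cos s ^ 2))).
Definition Ac (ch H : R) := Psi kap ch H.
Definition cc (H : R) := 2 * PI / Ac (2 * PI) H.
Definition Qc (ch H : R) := cc H * Ac ch H.
Definition Xc (ch H : R) := 2 * sqrt H * cos ch / sqrt (1 + sqrt (1 + 8 * eps * (H * cos ch ^ 2))).
Definition Vc (ch H : R) := sqrt (2 * H) * sin ch.

Lemma arg_pos s H : 0 < H -> 0 < 1 + 8 * eps * (H * cos s ^ 2).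
Proof. intros. assert (0 <= cos s ^ 2) by (apply pow2_ge_0). assert (0 <= H * cos s ^2) by (apply Rmult_le_pos; lra). assert (0 <= 8 * eps * (H * cos s ^2)) by (apply Rmult_le_pos; lra). lra. Qed.

Lemma sqrt_arg_ge1 s H : 0 < H -> 1 <= sqrt (1 + 8 * eps * (H * cos s ^ 2)).
Proof.
  intros. apply Rle_trans with (sqrt 1); [rewrite sqrt_1; lra|]. apply sqrt_le_1_alt.
  assert (0 <= cos s ^ 2) by (apply pow2_ge_0). assert (0 <= H * cos s ^2) by (apply Rmult_le_pos; lra). assert (0 <= 8 * eps * (H * cos s ^2)) by (apply Rmult_le_pos; lra). lra.
Qed.

Lemma Sm_kap n : Sm n Upos kap.
Proof.
  unfold kap. smt; unfold Upos; intros x y Hy.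
  all: try (pose proof (arg_pos x y Hy); pose proof (sqrt_arg_ge1 x y Hy); lra).
  all: try apply arg_pos; auto.
Qed.

Lemma Sm_Ac n : Sm n Upos Ac.
Proof. apply Sm_Psi, Sm_kap. Qed.


Lemma kap_cont s H : 0 < H -> continuity_2d_pt kap s H.
Proof. intros HH. apply (Sm_cont 0 Upos kap (Sm_kap 0)); auto. Qed.

Lemma kap_exRInt H a b : 0 < H -> ex_RInt (fun s => kap s H) a b.
Proof. intros HH. apply Psi_exRInt; auto. intros; apply kap_cont; auto. Qed.

Definition mlow (H : R) := / (2 * sqrt (1 + 8 * eps * H)).

Lemma mlow_pos H : 0 < H -> 0 < mlow H.
Proof. intros. unfold mlow. apply Rinv_0_lt_compat. apply Rmult_lt_0_compat. lra.
  apply sqrt_lt_R0. assert (0 < 8 * eps * H) by (apply Rmult_lt_0_compat; lra). lra. Qed.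

Lemma kap_low s H : 0 < H -> mlow H <= kap s H.
Proof.
  intros HH. unfold kap, mlow. set (S := sqrt (1 + 8 * eps * (H * cos s ^ 2))).
  assert (S1 : 1 <= S) by apply sqrt_arg_ge1, HH.
  assert (S2 : S <= sqrt (1 + 8 * eps * H)).
  { apply sqrt_le_1_alt. assert (cos s ^ 2 <= 1) by (pose proof (COS_bound s); nra).
    assert (H * cos s ^ 2 <= H) by nra. assert (0 < 8 * eps) by lra. nra. }
  assert (S3 : 1 <= sqrt (1 + S)).
  { apply Rle_trans with (sqrt 1); [rewrite sqrt_1; lra|]. apply sqrt_le_1_alt. lra. }
  unfold Rdiv. apply Rle_trans with (/ (2 * S)).
  - apply Rinv_le_contravar; lra.
  - rewrite <- (Rmult_1_l (/ (2 * S))) at 1. apply Rmult_le_compat_r; [|lra].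
    apply Rlt_le, Rinv_0_lt_compat; lra.
Qed.

Lemma kap_pos s H : 0 < H -> 0 < kap s H.
Proof. intros. apply Rlt_le_trans with (mlow H). apply mlow_pos; auto. apply kap_low; auto. Qed.

Lemma Ac_0 H : Ac 0 H = 0.
Proof. unfold Ac, Psi. apply (RInt_point (V:=R_CompleteNormedModule)). Qed.

Lemma Ac_diff H a b : 0 < H -> Ac b H - Ac a H = RInt (fun s => kap s H) a b.
Proof.
  intros HH. unfold Ac, Psi. rewrite <- (RInt_Chasles (fun s => kap s H) 0 a b) by (apply kap_exRInt; auto).
  change (plus ?x ?y) with (x + y). ring.
Qed.

Lemma Ac_incr H a b : 0 < H -> a <= b -> mlow H * (b - a) <= Ac b H - Ac a H.
Proof.
  intros HH Hab. rewrite Ac_diff by auto.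
  replace (mlow H * (b - a)) with (RInt (fun _ => mlow H) a b).
  - apply RInt_le; auto. apply ex_RInt_const. apply kap_exRInt; auto.
    intros; apply kap_low; auto.
  - rewrite (RInt_const (V:=R_CompleteNormedModule)). unfold scal; simpl. unfold mult; simpl. ring.
Qed.

Lemma Ac_per H ch : 0 < H -> Ac (ch + 2 * PI) H = Ac ch H + Ac (2 * PI) H.
Proof.
  intros HH.
  assert (E : Ac (ch + 2 * PI) H - Ac (2 * PI) H = Ac ch H).
  { rewrite Ac_diff by auto. unfold Ac, Psi.
    assert (E2 := RInt_comp_lin (fun s => kap s H) 1 (2 * PI) 0 ch).
    replace (1 * 0 + 2 * PI) with (2 * PI) in E2 by ring.
    replace (1 * ch + 2 * PI) with (ch + 2 * PI) in E2 by ring.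
    rewrite <- E2 by (apply kap_exRInt; auto).
    apply RInt_ext. intros x _. change (scal 1 ?y) with (1 * y). rewrite Rmult_1_l.
    unfold kap. replace (1 * x + 2 * PI) with (x + 2 * INR 1 * PI) by (simpl; ring).
    rewrite cos_period. reflexivity. }
  lra.
Qed.

Lemma Ac2pi_pos H : 0 < H -> 0 < Ac (2 * PI) H.
Proof.
  intros HH. pose proof (Ac_incr H 0 (2 * PI) HH). rewrite Ac_0 in H0.
  assert (0 < mlow H * (2 * PI - 0)). { apply Rmult_lt_0_compat. apply mlow_pos; auto. pose proof PI_RGT_0. lra. }
  pose proof PI_RGT_0. lra.
Qed.

Lemma Qc_0 H : Qc 0 H = 0.
Proof. unfold Qc. rewrite Ac_0. ring. Qed.

Lemma Qc_2pi H : 0 < H -> Qc (2 * PI) H = 2 * PI.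
Proof. intros HH. unfold Qc, cc. field. apply Rgt_not_eq, Ac2pi_pos; auto. Qed.

Lemma cc_pos H : 0 < H -> 0 < cc H.
Proof. intros HH. unfold cc. apply Rdiv_lt_0_compat. pose proof PI_RGT_0; lra. apply Ac2pi_pos; auto. Qed.

Lemma Qc_per H ch : 0 < H -> Qc (ch + 2 * PI) H = Qc ch H + 2 * PI.
Proof.
  intros HH. unfold Qc. rewrite Ac_per by auto. rewrite Rmult_plus_distr_l. f_equal.
  unfold cc. field. apply Rgt_not_eq, Ac2pi_pos; auto.
Qed.

Lemma Qc_perZ H ch (k : Z) : 0 < H -> Qc (ch + 2 * PI * IZR k) H = Qc ch H + 2 * PI * IZR k.
Proof.
  intros HH.
  assert (P : forall n : nat, forall c, Qc (c + 2 * PI * INR n) H = Qc c H + 2 * PI * INR n).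
  { induction n; intros c. simpl. rewrite !Rmult_0_r, !Rplus_0_r. auto.
    rewrite S_INR. replace (c + 2 * PI * (INR n + 1)) with ((c + 2 * PI * INR n) + 2 * PI) by ring.
    rewrite Qc_per, IHn by auto. ring. }
  destruct (Z_le_gt_dec 0 k) as [Hk|Hk].
  - rewrite <- (Z2Nat.id k Hk), <- INR_IZR_INZ. apply P.
  - assert (Hk' : (0 <= - k)%Z) by lia.
    assert (E := P (Z.to_nat (- k)) (ch + 2 * PI * IZR k)).
    rewrite INR_IZR_INZ, Z2Nat.id, opp_IZR in E by auto.
    replace (ch + 2 * PI * IZR k + 2 * PI * - IZR k) with ch in E by ring. lra.
Qed.

Lemma Qc_incr H a b : 0 < H -> a < b -> Qc a H < Qc b H.
Proof.
  intros HH Hab. unfold Qc. pose proof (Ac_incr H a b HH (Rlt_le _ _ Hab)).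
  assert (0 < mlow H * (b - a)) by (apply Rmult_lt_0_compat; [apply mlow_pos; auto|lra]).
  apply Rmult_lt_compat_l. apply cc_pos; auto. lra.
Qed.

Lemma Qc_cont1 H : 0 < H -> forall ch, continuity_pt (fun z => Qc z H) ch.
Proof.
  intros HH ch. unfold Qc. apply continuity_pt_mult. apply continuity_pt_const. intros ? ?; auto.
  apply continuity_pt_filterlim. apply cont_continuous.
  apply (Sm_cont 0 Upos Ac (Sm_Ac 0)). auto.
Qed.

Lemma Qc_surj H Q : 0 < H -> exists ch, Qc ch H = Q.
Proof.
  intros HH. set (k := Int_part (Q / (2 * PI))).
  assert (Hpi : 0 < 2 * PI) by (pose proof PI_RGT_0; lra).
  destruct (base_Int_part (Q / (2 * PI))) as [B1 B2]. fold k in B1, B2.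
  assert (L : 2 * PI * IZR k <= Q).
  { replace Q with (2 * PI * (Q / (2 * PI))) by (field; lra). apply Rmult_le_compat_l; lra. }
  assert (U : Q <= 2 * PI * IZR k + 2 * PI).
  { replace Q with (2 * PI * (Q / (2 * PI))) at 1 by (field; lra).
    replace (2 * PI * IZR k + 2 * PI) with (2 * PI * (IZR k + 1)) by ring.
    apply Rmult_le_compat_l; lra. }
  destruct (IVT_gen (fun z => Qc z H) (2 * PI * IZR k) (2 * PI * IZR k + 2 * PI) Q) as [c [_ Hc]].
  - intros x. apply Qc_cont1; auto.
  - pose proof (Qc_perZ H 0 k HH) as E0. rewrite Rplus_0_l, Qc_0, Rplus_0_l in E0.
    pose proof (Qc_perZ H (2 * PI) k HH) as E1. rewrite Qc_2pi in E1 by auto.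
    replace (2 * PI + 2 * PI * IZR k) with (2 * PI * IZR k + 2 * PI) in E1 by ring.
    rewrite E0, E1, Rmin_left, Rmax_right by lra. lra.
  - exists c; auto.
Qed.

End Conc.

Section Impl.
Variables (Phi Phi1 Phi2 chiF : R -> R -> R).
Hypothesis HD : forall ch H, 0 < H -> differentiable_pt_lim Phi ch H (Phi1 ch H) (Phi2 ch H).
Hypothesis Hpos : forall ch H, 0 < H -> 0 < Phi1 ch H.
Hypothesis Hmono : forall a b H, 0 < H -> a < b -> Phi a H < Phi b H.
Hypothesis Hchi : forall Q H, 0 < H -> Phi (chiF Q H) H = Q.

Lemma Phi_cont ch H : 0 < H -> continuity_2d_pt Phi ch H.
Proof. intros. apply differentiable_continuity_pt. do 2 eexists; apply HD; auto. Qed.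

Lemma chi_cont Q0 H0 : 0 < H0 -> continuity_2d_pt chiF Q0 H0.
Proof.
  intros HH0 e. set (c0 := chiF Q0 H0).
  assert (E0 : Phi c0 H0 = Q0) by (apply Hchi; auto).
  assert (G1 : Q0 < Phi (c0 + e) H0) by (rewrite <- E0; apply Hmono; auto; destruct e; simpl; lra).
  assert (G2 : Phi (c0 - e) H0 < Q0) by (rewrite <- E0; apply Hmono; auto; destruct e; simpl; lra).
  set (gap := Rmin (Phi (c0 + e) H0 - Q0) (Q0 - Phi (c0 - e) H0)).
  assert (Hg : 0 < gap / 2) by (unfold gap; apply Rmin_case; lra).
  destruct (Phi_cont (c0 + e) H0 HH0 (mkposreal _ Hg)) as [d1 Hd1].
  destruct (Phi_cont (c0 - e) H0 HH0 (mkposreal _ Hg)) as [d2 Hd2].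
  assert (Hd : 0 < Rmin (Rmin d1 d2) (Rmin (gap / 2) (H0 / 2))).
  { repeat apply Rmin_pos; try apply cond_pos; lra. }
  exists (mkposreal _ Hd). simpl. intros Q H HQ HH.
  assert (HQ' : Rabs (Q - Q0) < gap / 2) by
    (eapply Rlt_le_trans; [exact HQ|eapply Rle_trans; [apply Rmin_r|apply Rmin_l]]).
  assert (HH1 : Rabs (H - H0) < d1) by
    (eapply Rlt_le_trans; [exact HH|eapply Rle_trans; [apply Rmin_l|apply Rmin_l]]).
  assert (HH2 : Rabs (H - H0) < d2) by
    (eapply Rlt_le_trans; [exact HH|eapply Rle_trans; [apply Rmin_l|apply Rmin_r]]).
  assert (HH3 : Rabs (H - H0) < H0 / 2) by
    (eapply Rlt_le_trans; [exact HH|eapply Rle_trans; [apply Rmin_r|apply Rmin_r]]).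
  assert (Hp : 0 < H) by (apply Rabs_lt_between' in HH3; lra).
  specialize (Hd1 (c0 + e) H). specialize (Hd2 (c0 - e) H). simpl in Hd1, Hd2.
  rewrite Rminus_eq_0, Rabs_R0 in Hd1, Hd2.
  specialize (Hd1 (cond_pos _) HH1). specialize (Hd2 (cond_pos _) HH2).
  assert (g1 : gap <= Phi (c0 + e) H0 - Q0) by apply Rmin_l.
  assert (g2 : gap <= Q0 - Phi (c0 - e) H0) by apply Rmin_r.
  apply Rabs_lt_between' in Hd1. apply Rabs_lt_between' in Hd2. apply Rabs_lt_between' in HQ'.
  assert (EQ := Hchi Q H Hp).
  apply Rabs_lt_between'. split.
  - destruct (Rlt_le_dec (c0 - e) (chiF Q H)) as [L|L]; auto.
    destruct (Req_dec (c0 - e) (chiF Q H)) as [E|E].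
    + rewrite <- E in EQ. lra.
    + assert (Phi (chiF Q H) H < Phi (c0 - e) H) by (apply Hmono; auto; lra). lra.
  - destruct (Rlt_le_dec (chiF Q H) (c0 + e)) as [L|L]; auto.
    destruct (Req_dec (c0 + e) (chiF Q H)) as [E|E].
    + rewrite <- E in EQ. lra.
    + assert (Phi (c0 + e) H < Phi (chiF Q H) H) by (apply Hmono; auto; lra). lra.
Qed.

Lemma chi_diff Q0 H0 : 0 < H0 ->
  differentiable_pt_lim chiF Q0 H0 (/ Phi1 (chiF Q0 H0) H0) (- (Phi2 (chiF Q0 H0) H0 / Phi1 (chiF Q0 H0) H0)).
Proof.
  intros HH0 e. set (c0 := chiF Q0 H0). set (L1 := Phi1 c0 H0). set (L2 := Phi2 c0 H0).
  assert (HL1 : 0 < L1) by (apply Hpos; auto).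
  assert (E0 : Phi c0 H0 = Q0) by (apply Hchi; auto).
  set (K := (2 + 2 * Rabs L2 + L1) / L1).
  assert (HK : 1 <= K).
  { unfold K. apply (Rmult_le_reg_r L1); auto. unfold Rdiv. rewrite Rmult_assoc, Rinv_l by lra.
    pose proof (Rabs_pos L2). lra. }
  set (eta := Rmin (L1 / 2) (e * L1 / (K + 1))).
  assert (Heta : 0 < eta).
  { unfold eta. apply Rmin_pos. lra. apply Rdiv_lt_0_compat. apply Rmult_lt_0_compat. apply cond_pos. lra. lra. }
  destruct (HD c0 H0 HH0 (mkposreal _ Heta)) as [d1 Hd1]. simpl in Hd1. fold L1 L2 in Hd1.
  destruct (chi_cont Q0 H0 HH0 d1) as [d2 Hd2].
  assert (Hd : 0 < Rmin (Rmin d1 d2) (H0 / 2)) by (repeat apply Rmin_pos; try apply cond_pos; lra).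
  exists (mkposreal _ Hd). simpl. intros Q H HQ HH.
  assert (HQ2 : Rabs (Q - Q0) < d2) by (eapply Rlt_le_trans; [exact HQ|eapply Rle_trans; [apply Rmin_l|apply Rmin_r]]).
  assert (HH2 : Rabs (H - H0) < d2) by (eapply Rlt_le_trans; [exact HH|eapply Rle_trans; [apply Rmin_l|apply Rmin_r]]).
  assert (HH1 : Rabs (H - H0) < d1) by (eapply Rlt_le_trans; [exact HH|eapply Rle_trans; [apply Rmin_l|apply Rmin_l]]).
  assert (HH3 : Rabs (H - H0) < H0 / 2) by (eapply Rlt_le_trans; [exact HH|apply Rmin_r]).
  assert (Hp : 0 < H) by (apply Rabs_lt_between' in HH3; lra).
  set (c := chiF Q H).
  assert (Hc : Rabs (c - c0) < d1) by (apply Hd2; auto).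
  assert (EQ : Phi c H = Q) by (apply Hchi; auto).
  specialize (Hd1 c H Hc HH1). rewrite EQ, E0 in Hd1.
  set (r := Q - Q0 - (L1 * (c - c0) + L2 * (H - H0))) in Hd1.
  set (a := Rabs (c - c0)) in *. set (h := Rabs (H - H0)) in *. set (q := Rabs (Q - Q0)).
  set (m := Rmax q h).
  assert (Ha : 0 <= a) by apply Rabs_pos. assert (Hh : 0 <= h) by apply Rabs_pos.
  assert (Hq : 0 <= q) by apply Rabs_pos.
  assert (Hqm : q <= m) by apply Rmax_l. assert (Hhm : h <= m) by apply Rmax_r.
  assert (Heta1 : eta <= L1 / 2) by apply Rmin_l.
  assert (Heta2 : eta <= e * L1 / (K + 1)) by apply Rmin_r.
  assert (La : L1 * a <= q + Rabs L2 * h + Rabs r).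
  { unfold a. rewrite <- (Rabs_pos_eq L1) by lra. rewrite <- Rabs_mult.
    replace (L1 * (c - c0)) with ((Q - Q0) + (- (L2 * (H - H0))) + - r) by (unfold r; ring).
    eapply Rle_trans. apply Rabs_triang. rewrite Rabs_Ropp.
    eapply Rle_trans. apply Rplus_le_compat_r. apply Rabs_triang. rewrite Rabs_Ropp, Rabs_mult. unfold q, h. lra. }
  assert (Hmax : Rmax a h <= K * m).
  { apply Rmax_lub.
    - destruct (Rle_dec a h) as [L|L].
      + apply Rle_trans with m. lra. rewrite <- (Rmult_1_l m) at 1. apply Rmult_le_compat_r; lra.
      + rewrite Rmax_left in Hd1 by lra.
        assert (L1 * a <= q + Rabs L2 * h + L1 / 2 * a).
        { eapply Rle_trans. apply La. apply Rplus_le_compat_l. eapply Rle_trans. apply Hd1. apply Rmult_le_compat_r; lra. }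
        assert (L1 / 2 * a <= (1 + Rabs L2) * m).
        { pose proof (Rabs_pos L2). assert (Rabs L2 * h <= Rabs L2 * m) by (apply Rmult_le_compat_l; lra). lra. }
        unfold K. apply (Rmult_le_reg_l L1); auto.
        replace (L1 * ((2 + 2 * Rabs L2 + L1) / L1 * m)) with ((2 + 2 * Rabs L2 + L1) * m) by (field; lra).
        pose proof (Rabs_pos L2). nra.
    - apply Rle_trans with m. lra. rewrite <- (Rmult_1_l m) at 1. apply Rmult_le_compat_r; lra. }
  replace (c - c0 - (/ L1 * (Q - Q0) + - (L2 / L1) * (H - H0))) with (- r / L1) by (unfold r; field; lra).
  unfold Rdiv. rewrite Rabs_mult, Rabs_Ropp, (Rabs_pos_eq (/ L1)) by (apply Rlt_le, Rinv_0_lt_compat; lra).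
  fold q. fold m.
  assert (Rabs r <= eta * (K * m)).
  { eapply Rle_trans. apply Hd1. apply Rmult_le_compat_l; lra. }
  assert (eta * (K * m) <= e * L1 / (K + 1) * (K * m)).
  { apply Rmult_le_compat_r; auto. apply Rmult_le_pos; lra. }
  assert (e * L1 / (K + 1) * (K * m) <= e * L1 * m).
  { replace (e * L1 / (K + 1) * (K * m)) with (e * L1 * m * (K / (K + 1))) by (field; lra).
    rewrite <- (Rmult_1_r (e * L1 * m)) at 2. apply Rmult_le_compat_l.
    apply Rmult_le_pos; [apply Rmult_le_pos; [apply Rlt_le, cond_pos|lra]|lra].
    apply (Rmult_le_reg_r (K + 1)). lra. unfold Rdiv. rewrite Rmult_assoc, Rinv_l by lra. lra. }
  apply (Rmult_le_reg_r L1); auto. rewrite Rmult_assoc, Rinv_l by lra.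
  replace (e * m * L1) with (e * L1 * m) by ring. lra.
Qed.
End Impl.

Lemma trig_perZ x (k : Z) : cos (x + 2 * PI * IZR k) = cos x /\ sin (x + 2 * PI * IZR k) = sin x.
Proof.
  destruct (Z_le_gt_dec 0 k) as [Hk|Hk].
  - rewrite <- (Z2Nat.id k Hk), <- INR_IZR_INZ.
    replace (x + 2 * PI * INR (Z.to_nat k)) with (x + 2 * INR (Z.to_nat k) * PI) by ring.
    rewrite cos_period, sin_period; auto.
  - assert (Hk' : (0 <= - k)%Z) by lia.
    set (y := x + 2 * PI * IZR k).
    assert (E : x = y + 2 * INR (Z.to_nat (- k)) * PI).
    { rewrite INR_IZR_INZ, Z2Nat.id, opp_IZR by auto. unfold y; ring. }
    rewrite E, cos_period, sin_period; auto.
Qed.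

Lemma sincos_eq a b : sin a = sin b -> cos a = cos b -> eq_mod2pi a b.
Proof.
  intros Hs Hc.
  assert (S0 : sin (a - b) = 0) by (rewrite sin_minus, Hs, Hc; ring).
  assert (C1 : cos (a - b) = 1) by (rewrite cos_minus, Hs, Hc; pose proof (sin2_cos2 b); unfold Rsqr in *; lra).
  destruct (sin_eq_0_0 _ S0) as [k Hk].
  destruct (Z.Even_or_Odd k) as [[m Hm]|[m Hm]]; subst k.
  - exists m. rewrite mult_IZR in Hk. lra.
  - exfalso. rewrite plus_IZR, mult_IZR in Hk.
    replace (a - b) with (PI + 2 * PI * IZR m) in C1 by lra.
    rewrite (proj1 (trig_perZ PI m)), cos_PI in C1. lra.
Qed.

Section Ident.
Variable eps : R.
Hypothesis Heps : 0 < eps.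

Lemma Phi_nonneg x : 0 <= Defs.Phi eps x.
Proof. unfold Defs.Phi. assert (0 <= x ^ 2) by apply pow2_ge_0. assert (0 <= x ^ 4) by (replace (x^4) with ((x^2)^2) by ring; apply pow2_ge_0). assert (0 <= eps * x ^ 4) by (apply Rmult_le_pos; lra). lra. Qed.

Lemma chi_sc x v H : 0 < H -> Hen eps x v = H ->
  sin (chi eps x v) = v / sqrt (2 * H) /\ cos (chi eps x v) ^ 2 = 1 - (v / sqrt (2 * H)) ^ 2 /\
  (0 < x -> 0 <= cos (chi eps x v)) /\ (x <= 0 -> cos (chi eps x v) <= 0).
Proof.
  intros HH He. set (z := v / sqrt (2 * H)).
  assert (Hs : 0 < sqrt (2 * H)) by (apply sqrt_lt_R0; lra).
  assert (Hz2 : z ^ 2 = v ^ 2 / (2 * H)).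
  { unfold z. unfold Rdiv. rewrite Rpow_mult_distr, pow_inv, pow2_sqrt by lra. reflexivity. }
  assert (Hz : -1 <= z <= 1).
  { assert (z ^ 2 <= 1).
    { rewrite Hz2. unfold Hen in He. pose proof (Phi_nonneg x). apply (Rmult_le_reg_r (2 * H)). lra.
      unfold Rdiv. rewrite Rmult_assoc, Rinv_l by lra. lra. }
    split; nra. }
  assert (Hsq : 0 <= sqrt (1 - z ^ 2)) by apply sqrt_pos.
  assert (Hsq2 : sqrt (1 - z ^ 2) ^ 2 = 1 - z ^ 2) by (apply pow2_sqrt; nra).
  unfold chi. rewrite He. fold z.
  destruct (Rlt_dec 0 x) as [Hx|Hx].
  - rewrite sin_asin, cos_asin by auto. unfold Rsqr. replace (z * z) with (z ^ 2) by ring.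
    repeat split; auto; lra.
  - rewrite sin_PI_x, Rtrigo_facts.cos_pi_minus, sin_asin, cos_asin by auto. unfold Rsqr.
    replace (z * z) with (z ^ 2) by ring.
  - split; auto. split. replace ((- sqrt (1 - z ^ 2)) ^ 2) with (sqrt (1 - z ^ 2) ^ 2) by ring. exact Hsq2. split; intros; lra.
Qed.

Definition yv (ch H : R) := H * cos ch ^ 2.

Lemma Xc_sq ch H : 0 < H -> Xc eps ch H ^ 2 = 4 * yv ch H / (1 + sqrt (1 + 8 * eps * yv ch H)).
Proof.
  intros HH. unfold Xc, yv. pose proof (sqrt_arg_ge1 eps Heps ch H HH).
  unfold Rdiv. rewrite !Rpow_mult_distr, pow_inv, !pow2_sqrt by lra. ring.
Qed.

Lemma Phi_Xc ch H : 0 < H -> Defs.Phi eps (Xc eps ch H) = yv ch H.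
Proof.
  intros HH. unfold Defs.Phi. replace (Xc eps ch H ^ 4) with ((Xc eps ch H ^ 2) ^ 2) by ring.
  rewrite Xc_sq by auto. set (y := yv ch H). set (S := sqrt (1 + 8 * eps * y)).
  assert (Hy : 0 <= y) by (unfold y, yv; apply Rmult_le_pos; [lra|apply pow2_ge_0]).
  assert (HS : S ^ 2 = 1 + 8 * eps * y) by (apply pow2_sqrt; nra).
  assert (HS1 : 0 <= S) by apply sqrt_pos.
  field_simplify; [|lra]. rewrite HS. field.
  assert (0 <= eps * y) by (apply Rmult_le_pos; lra). lra.
Qed.


Lemma Hen_XV ch H : 0 < H -> Hen eps (Xc eps ch H) (Vc ch H) = H.
Proof.
  intros HH. unfold Hen. rewrite Phi_Xc by auto. unfold Vc, yv.
  rewrite Rpow_mult_distr, pow2_sqrt by lra. pose proof (sin2_cos2 ch). unfold Rsqr in H0. nra.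
Qed.

Lemma Xc_fac ch H : 0 < H -> exists p, 0 < p /\ Xc eps ch H = cos ch * p.
Proof.
  intros HH. pose proof (sqrt_arg_ge1 eps Heps ch H HH).
  exists (2 * sqrt H / sqrt (1 + sqrt (1 + 8 * eps * (H * cos ch ^ 2)))). split.
  - apply Rdiv_lt_0_compat. apply Rmult_lt_0_compat. lra. apply sqrt_lt_R0; auto.
    apply sqrt_lt_R0; lra.
  - unfold Xc. field. apply Rgt_not_eq, sqrt_lt_R0; lra.
Qed.

Lemma chi_XV ch H : 0 < H -> eq_mod2pi (chi eps (Xc eps ch H) (Vc ch H)) ch.
Proof.
  intros HH. destruct (chi_sc (Xc eps ch H) (Vc ch H) H HH (Hen_XV ch H HH)) as [Hs [Hc [Hp Hn]]].
  assert (Hs2 : 0 < sqrt (2 * H)) by (apply sqrt_lt_R0; lra).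
  assert (E : Vc ch H / sqrt (2 * H) = sin ch) by (unfold Vc; field; lra).
  rewrite E in Hs, Hc. apply sincos_eq; auto.
  pose proof (sin2_cos2 ch). unfold Rsqr in H0.
  assert (Hc2 : cos (chi eps (Xc eps ch H) (Vc ch H)) ^ 2 = cos ch ^ 2) by (rewrite Hc; nra).
  destruct (Xc_fac ch H HH) as [p [Pp Ep]].
  set (a := cos (chi eps (Xc eps ch H) (Vc ch H))) in *.
  assert (0 <= a * cos ch).
  { destruct (Rlt_dec 0 (Xc eps ch H)) as [L|L].
    - specialize (Hp L). rewrite Ep in L. assert (0 < cos ch) by nra. nra.
    - assert (L' : Xc eps ch H <= 0) by lra. specialize (Hn L'). rewrite Ep in L'.
      assert (cos ch <= 0) by nra. nra. }
  set (c := cos ch) in *.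
  assert (S1 : (a * c) ^ 2 = (c ^ 2) ^ 2) by (rewrite Rpow_mult_distr, Hc2; ring).
  assert (S2 : a * c = c ^ 2).
  { rewrite <- (sqrt_pow2 (a * c)), <- (sqrt_pow2 (c ^ 2)) by (auto; apply pow2_ge_0). rewrite S1; auto. }
  assert (S3 : (a - c) ^ 2 = 0) by (replace ((a - c) ^ 2) with (a ^ 2 - 2 * (a * c) + c ^ 2) by ring; rewrite S2, Hc2; ring).
  assert (S4 : Rsqr (a - c) = 0) by (unfold Rsqr; rewrite <- S3; ring). apply Rsqr_0_uniq in S4. lra.
Qed.

Lemma XV_nz ch H : 0 < H -> (Xc eps ch H, Vc ch H) <> (0, 0).
Proof.
  intros HH E. injection E; intros E1 E2. pose proof (Hen_XV ch H HH). rewrite E1, E2 in H0.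
  unfold Hen, Defs.Phi in H0. lra.
Qed.

Lemma x_of_Phi ch H : 0 < H -> Defs.Phi eps (x_of eps ch H) = yv ch H.
Proof.
  intros HH. unfold x_of.
  match goal with |- context [epsilon ?i ?P] => assert (Ex : exists x, P x); [|pose proof (epsilon_spec i P Ex) as Sp; set (x0 := epsilon i P) in *] end.
  { exists (Xc eps ch H), (Vc ch H). split; [apply XV_nz; auto|split; [apply Hen_XV; auto|apply chi_XV; auto]]. }
  destruct Sp as [v [_ [He [k Hk]]]].
  destruct (chi_sc x0 v H HH He) as [_ [Hc _]].
  rewrite Hk, (proj1 (trig_perZ ch k)) in Hc.
  assert (Hs2 : 0 < sqrt (2 * H)) by (apply sqrt_lt_R0; lra).
  assert (E : (v / sqrt (2 * H)) ^ 2 = v ^ 2 / (2 * H)).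
  { unfold Rdiv. rewrite Rpow_mult_distr, pow_inv, pow2_sqrt by lra. reflexivity. }
  rewrite E in Hc. unfold yv. rewrite Hc. unfold Hen in He. field_simplify; [|lra]. lra.
Qed.

Lemma a_fun_kap ch H : 0 < H -> a_fun eps ch H = / kap eps ch H.
Proof.
  intros HH. unfold a_fun, kap. set (x := x_of eps ch H).
  assert (Hy := x_of_Phi ch H HH). fold x in Hy. unfold yv in Hy.
  rewrite <- Hy. unfold Defs.Phi.
  assert (Hx2 : 0 <= x ^ 2) by apply pow2_ge_0.
  assert (Hex : 0 <= eps * x ^ 2) by (apply Rmult_le_pos; lra).
  replace (1 + 8 * eps * (x ^ 2 / 2 + eps * x ^ 4 / 2)) with ((1 + 2 * eps * x ^ 2) ^ 2) by field.
  rewrite sqrt_pow2 by lra.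
  replace (1 + (1 + 2 * eps * x ^ 2)) with (2 * (1 + eps * x ^ 2)) by ring.
  rewrite sqrt_mult by lra.
  assert (Q2 : 0 < sqrt 2) by (apply sqrt_lt_R0; lra).
  assert (Q3 : 0 < sqrt (1 + eps * x ^ 2)) by (apply sqrt_lt_R0; lra).
  assert (Q4 : sqrt 2 * sqrt 2 = 2) by (apply sqrt_sqrt; lra).
  replace (2 * (1 + 2 * eps * x ^ 2)) with (sqrt 2 * sqrt 2 * (1 + 2 * eps * x ^ 2)) by (rewrite Q4; ring). field. split; lra.
Qed.

Lemma c_fun_cc H : 0 < H -> c_fun eps H = cc eps H.
Proof.
  intros HH. unfold c_fun, cc, Ac, Psi. f_equal. apply RInt_ext. intros x _.
  rewrite a_fun_kap, Rinv_inv by auto. reflexivity.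
Qed.

Lemma Q_fun_Qc ch H : 0 < H -> Q_fun eps ch H = Qc eps ch H.
Proof.
  intros HH. unfold Q_fun, Qc. rewrite c_fun_cc by auto. f_equal. unfold Ac, Psi. apply RInt_ext. intros x _.
  rewrite a_fun_kap, Rinv_inv by auto. reflexivity.
Qed.

End Ident.

Section E1.
Variable eps : R.
Hypothesis Heps : 0 < eps.

Lemma Sm_cc2 n : Sm n Upos (fun _ H => cc eps H).
Proof.
  unfold cc. smt.
  - apply (Sm_comp n Upos Upos (Ac eps) (fun _ _ => 2 * PI) (fun _ y => y)).
    apply Sm_Ac; auto. apply Sm_const. apply Sm_p2. auto.
  - intros x y Hy. apply Ac2pi_pos; auto.
Qed.

Lemma Sm_Qc n : Sm n Upos (Qc eps).
Proof.
  unfold Qc. apply (Sm_mult n Upos (fun _ H => cc eps H) (Ac eps)). apply Sm_cc2. apply Sm_Ac; auto.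
Qed.

Lemma Qc_d1 ch H : 0 < H -> is_derive (fun z => Qc eps z H) ch (cc eps H * kap eps ch H).
Proof.
  intros HH. unfold Qc. apply (is_derive_scal (fun z => Ac eps z H)).
  unfold Ac, Psi.
  apply (is_derive_RInt (fun s => kap eps s H) (fun b => RInt (fun s => kap eps s H) 0 b) 0).
  - apply filter_forall. intros b. apply (RInt_correct (V:=R_CompleteNormedModule)).
    apply kap_exRInt; auto.
  - apply cont_continuous, kap_cont; auto.
Qed.

Definition chiQ (Q H : R) : R := epsilon (inhabits 0) (fun ch => Qc eps ch H = Q).

Lemma chiQ_spec Q H : 0 < H -> Qc eps (chiQ Q H) H = Q.
Proof.
  intros HH. unfold chiQ. apply (epsilon_spec (inhabits 0) (fun ch => Qc eps ch H = Q)).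
  apply Qc_surj; auto.
Qed.

Lemma Qc_mono a b H : 0 < H -> a < b -> Qc eps a H < Qc eps b H.
Proof. apply Qc_incr; auto. Qed.

Lemma Qc_inj a b H : 0 < H -> Qc eps a H = Qc eps b H -> a = b.
Proof.
  intros HH E. destruct (Rtotal_order a b) as [L|[L|L]]; auto.
  - pose proof (Qc_mono a b H HH L). lra.
  - pose proof (Qc_mono b a H HH L). lra.
Qed.

Lemma chiQ_range Q H : 0 < H -> 0 <= Q <= 2 * PI -> 0 <= chiQ Q H <= 2 * PI.
Proof.
  intros HH HQ. pose proof (chiQ_spec Q H HH) as E. split.
  - destruct (Rle_dec 0 (chiQ Q H)) as [L|L]; auto. exfalso.
    pose proof (Qc_mono (chiQ Q H) 0 H HH (Rnot_le_lt _ _ L)). rewrite Qc_0 in H0. lra.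
  - destruct (Rle_dec (chiQ Q H) (2 * PI)) as [L|L]; auto. exfalso.
    pose proof (Qc_mono (2 * PI) (chiQ Q H) H HH (Rnot_le_lt _ _ L)). rewrite Qc_2pi in H0 by auto. lra.
Qed.

Lemma chiQ_Qc ch H : 0 < H -> chiQ (Qc eps ch H) H = ch.
Proof. intros HH. apply (Qc_inj _ _ H HH). apply chiQ_spec; auto. Qed.

End E1.

Open Scope list_scope.

Lemma dpl_eq f x y a b a' b' : differentiable_pt_lim f x y a b -> a = a' -> b = b' ->
  differentiable_pt_lim f x y a' b'.
Proof. intros H -> ->; exact H. Qed.

Lemma dpl_mult2 (f g : R -> R -> R) x y f1 f2 g1 g2 :
  differentiable_pt_lim f x y f1 f2 -> differentiable_pt_lim g x y g1 g2 ->
  differentiable_pt_lim (fun a b => f a b * g a b) x y (g x y * f1 + f x y * g1) (g x y * f2 + f x y * g2).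
Proof.
  intros Hf Hg. apply (differentiable_pt_lim_comp (fun a b => a * b) f g); auto. apply dpl_mul.
Qed.

Lemma dpl_plus2 (f g : R -> R -> R) x y f1 f2 g1 g2 :
  differentiable_pt_lim f x y f1 f2 -> differentiable_pt_lim g x y g1 g2 ->
  differentiable_pt_lim (fun a b => f a b + g a b) x y (f1 + g1) (f2 + g2).
Proof.
  intros Hf Hg. replace (f1 + g1) with (1 * f1 + 1 * g1) by ring.
  replace (f2 + g2) with (1 * f2 + 1 * g2) by ring.
  apply (differentiable_pt_lim_comp (fun a b => a + b) f g); auto. apply dpl_add.
Qed.

Lemma pder_D (f0 : R -> R -> R) : smooth2 f0 -> forall w x v,
  differentiable_pt_lim (pder w f0) x v (pder (true :: w) f0 x v) (pder (false :: w) f0 x v).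
Proof.
  intros Hs w x v. apply cpl.
  - apply locally_2d_forall. intros u v'. destruct (Hs w u v') as [E _].
    apply Derive_correct in E. exact E.
  - apply (Hs (true :: w)).
  - destruct (Hs w x v) as [_ [E _]]. apply Derive_correct in E. exact E.
Qed.

Lemma schwarz_f0 (f0 : R -> R -> R) : smooth2 f0 -> forall x v,
  dv (dx f0) x v = dx (dv f0) x v.
Proof.
  intros Hs x v. symmetry. unfold dx, dv.
  apply (Schwarz f0 x v).
  - apply locally_2d_forall. intros u z.
    destruct (Hs nil u z) as [E1 [E2 _]]. destruct (Hs (false :: nil) u z) as [E3 _].
    destruct (Hs (true :: nil) u z) as [_ [E4 _]]. simpl in *. repeat split; auto.
  - apply (Hs (true :: false :: nil)).
  - apply (Hs (false :: true :: nil)).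
Qed.

Section Main.
Variable eps : R.
Hypothesis Heps : 0 < eps.
Variables Q1 Q2 X1 X2 V1 V2 : R -> R -> R.
Hypothesis HQd : forall ch H, 0 < H -> differentiable_pt_lim (Qc eps) ch H (Q1 ch H) (Q2 ch H).
Hypothesis HXd : forall ch H, 0 < H -> differentiable_pt_lim (Xc eps) ch H (X1 ch H) (X2 ch H).
Hypothesis HVd : forall ch H, 0 < H -> differentiable_pt_lim Vc ch H (V1 ch H) (V2 ch H).
Definition rho ch H := Q2 ch H * / Q1 ch H.
Definition al ch H := X2 ch H - rho ch H * X1 ch H.
Definition be ch H := V2 ch H - rho ch H * V1 ch H.
Variables al1 al2 be1 be2 : R -> R -> R.
Hypothesis Hald : forall ch H, 0 < H -> differentiable_pt_lim al ch H (al1 ch H) (al2 ch H).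
Hypothesis Hbed : forall ch H, 0 < H -> differentiable_pt_lim be ch H (be1 ch H) (be2 ch H).

Lemma Q1_eq ch H : 0 < H -> Q1 ch H = cc eps H * kap eps ch H.
Proof.
  intros HH. rewrite <- (is_derive_unique _ _ _ (Qc_d1 eps Heps ch H HH)).
  symmetry. apply is_derive_unique. apply (dpl_d1 _ _ _ _ (Q2 ch H)), HQd; auto.
Qed.

Lemma Q1_pos ch H : 0 < H -> 0 < Q1 ch H.
Proof.
  intros HH. rewrite Q1_eq by auto. apply Rmult_lt_0_compat. apply cc_pos; auto. apply kap_pos; auto.
Qed.

Lemma chiQ_d Q H : 0 < H -> differentiable_pt_lim (chiQ eps) Q H
  (/ Q1 (chiQ eps Q H) H) (- (Q2 (chiQ eps Q H) H / Q1 (chiQ eps Q H) H)).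
Proof.
  intros HH. apply (chi_diff (Qc eps) Q1 Q2 (chiQ eps)); auto.
  - intros; apply Q1_pos; auto.
  - intros; apply Qc_mono; auto.
  - intros; apply chiQ_spec; auto.
Qed.

Section F0.
Variable f0 : R -> R -> R.
Hypothesis Hs : smooth2 f0.

Definition Pc (w : list bool) ch H := pder w f0 (Xc eps ch H) (Vc ch H).

Lemma DP w ch H : 0 < H -> differentiable_pt_lim (Pc w) ch H
  (Pc (true :: w) ch H * X1 ch H + Pc (false :: w) ch H * V1 ch H)
  (Pc (true :: w) ch H * X2 ch H + Pc (false :: w) ch H * V2 ch H).
Proof.
  intros HH. apply (differentiable_pt_lim_comp (pder w f0) (Xc eps) Vc); auto.
  apply pder_D; auto.
Qed.

Definition Gf ch H := Pc (true :: nil) ch H * al ch H + Pc (false :: nil) ch H * be ch H.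
Definition G1 ch H := al ch H * (Pc (true :: true :: nil) ch H * X1 ch H + Pc (false :: true :: nil) ch H * V1 ch H)
  + Pc (true :: nil) ch H * al1 ch H
  + (be ch H * (Pc (true :: false :: nil) ch H * X1 ch H + Pc (false :: false :: nil) ch H * V1 ch H)
  + Pc (false :: nil) ch H * be1 ch H).
Definition G2 ch H := al ch H * (Pc (true :: true :: nil) ch H * X2 ch H + Pc (false :: true :: nil) ch H * V2 ch H)
  + Pc (true :: nil) ch H * al2 ch H
  + (be ch H * (Pc (true :: false :: nil) ch H * X2 ch H + Pc (false :: false :: nil) ch H * V2 ch H)
  + Pc (false :: nil) ch H * be2 ch H).

Lemma DG ch H : 0 < H -> differentiable_pt_lim Gf ch H (G1 ch H) (G2 ch H).
Proof.
  intros HH. unfold Gf, G1, G2. apply dpl_plus2; apply dpl_mult2; auto; apply DP; auto.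
Qed.

Lemma DF ch H : 0 < H -> differentiable_pt_lim (Pc nil) ch H
  (Pc (true :: nil) ch H * X1 ch H + Pc (false :: nil) ch H * V1 ch H)
  (Pc (true :: nil) ch H * X2 ch H + Pc (false :: nil) ch H * V2 ch H).
Proof. apply DP. Qed.

Definition gK Q K := Gf (chiQ eps Q K) K.
Definition gKK Q K := G1 (chiQ eps Q K) K * (- (Q2 (chiQ eps Q K) K / Q1 (chiQ eps Q K) K)) + G2 (chiQ eps Q K) K * 1.

Lemma DgK Q K : 0 < K -> differentiable_pt_lim gK Q K
  (G1 (chiQ eps Q K) K * / Q1 (chiQ eps Q K) K + G2 (chiQ eps Q K) K * 0) (gKK Q K).
Proof.
  intros HK. unfold gK, gKK. apply (differentiable_pt_lim_comp Gf (chiQ eps) (fun _ b => b)).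
  apply DG; auto. apply chiQ_d; auto. apply dpl_p2.
Qed.

Variable fbar : R -> R -> R -> R.
Hypothesis Hper : forall t Q K, fbar t (Q + 2 * PI) K = fbar t Q K.
Hypothesis Hinit : forall x v, (x, v) <> (0, 0) -> f0 x v = fbar 0 (Q_of eps x v) (K_of eps x v).

Lemma fbar_perZ t Q K (k : Z) : fbar t (Q + 2 * PI * IZR k) K = fbar t Q K.
Proof.
  assert (P : forall n : nat, forall q, fbar t (q + 2 * PI * INR n) K = fbar t q K).
  { induction n; intros q. simpl. rewrite Rmult_0_r, Rplus_0_r. auto.
    rewrite S_INR. replace (q + 2 * PI * (INR n + 1)) with ((q + 2 * PI * INR n) + 2 * PI) by ring.
    rewrite Hper, IHn. auto. }
  destruct (Z_le_gt_dec 0 k) as [Hk|Hk].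
  - rewrite <- (Z2Nat.id k Hk), <- INR_IZR_INZ. apply P.
  - assert (Hk' : (0 <= - k)%Z) by lia.
    assert (E := P (Z.to_nat (- k)) (Q + 2 * PI * IZR k)).
    rewrite INR_IZR_INZ, Z2Nat.id, opp_IZR in E by auto.
    replace (Q + 2 * PI * IZR k + 2 * PI * - IZR k) with Q in E by ring. auto.
Qed.

Lemma g_rep Q K : 0 < K -> fbar 0 Q K = Pc nil (chiQ eps Q K) K.
Proof.
  intros HK. unfold Pc. simpl. set (ch := chiQ eps Q K).
  rewrite Hinit by (apply XV_nz; auto).
  unfold Q_of, K_of. rewrite Hen_XV by auto. rewrite Q_fun_Qc by auto.
  destruct (chi_XV eps Heps ch K HK) as [k Hk]. rewrite Hk.
  rewrite Qc_perZ by auto. unfold ch; rewrite chiQ_spec by auto. symmetry; apply fbar_perZ.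
Qed.

Lemma Dg Q K : 0 < K -> differentiable_pt_lim (fun q k => fbar 0 q k) Q K
  ((Pc (true :: nil) (chiQ eps Q K) K * X1 (chiQ eps Q K) K + Pc (false :: nil) (chiQ eps Q K) K * V1 (chiQ eps Q K) K) * / Q1 (chiQ eps Q K) K
   + (Pc (true :: nil) (chiQ eps Q K) K * X2 (chiQ eps Q K) K + Pc (false :: nil) (chiQ eps Q K) K * V2 (chiQ eps Q K) K) * 0)
  (gK Q K).
Proof.
  intros HK. apply differentiable_pt_lim_ext with (f1 := fun q k => Pc nil (chiQ eps q k) k).
  - assert (e : 0 < K / 2) by lra. exists (mkposreal _ e). simpl. intros u v _ Hv.
    apply Rabs_lt_between' in Hv. symmetry. apply g_rep. lra.
  - eapply dpl_eq. apply (differentiable_pt_lim_comp (Pc nil) (chiQ eps) (fun _ b => b)).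
    apply DF; auto. apply chiQ_d; auto. apply dpl_p2.
    reflexivity. unfold gK, Gf, al, be, rho. unfold Rdiv. ring.
Qed.

End F0.
End Main.

Lemma ball_R (x : R) (e : posreal) y : ball x e y -> Rabs (y - x) < e.
Proof. intros H; exact H. Qed.

Section Y.
Variable eps : R.

Lemma Yop_formula (Fn : R -> R -> R -> R) (h : R -> R -> R) t Q K l1 l2 :
  0 < K -> ex_derive (c_fun eps) K ->
  (forall q k, 0 < k -> Fn t q k = h (q + c_fun eps k * t) k) ->
  differentiable_pt_lim h (Q + c_fun eps K * t) K l1 l2 ->
  Yop eps Fn t Q K = - l2.
Proof.
  intros HK Hc HF Hd. unfold Yop.
  assert (D1 : Derive (fun q => Fn t q K) Q = l1).
  { rewrite (Derive_ext _ (fun q => h (q + c_fun eps K * t) K)) by (intros; apply HF; auto).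
    apply is_derive_unique. apply is_derive_Reals.
    replace l1 with (l1 * 1 + l2 * 0) by ring.
    apply (derivable_pt_lim_comp_2d h (fun q => q + c_fun eps K * t) (fun _ => K)); auto.
    apply is_derive_Reals. auto_derive; auto.
    apply derivable_pt_lim_const. }
  assert (D2 : Derive (fun k => Fn t Q k) K = l1 * (Derive (c_fun eps) K * t) + l2 * 1).
  { rewrite (Derive_ext_loc _ (fun k => h (Q + c_fun eps k * t) k)).
    - apply is_derive_unique. apply is_derive_Reals.
      apply (derivable_pt_lim_comp_2d h (fun k => Q + c_fun eps k * t) (fun k => k)); auto.
      apply is_derive_Reals. auto_derive; auto. rewrite Rmult_1_l; reflexivity.
      apply derivable_pt_lim_id.
    - apply filter_imp with (2 := locally_pos K HK). intros; apply HF; auto. }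
  rewrite D1, D2. ring.
Qed.

Variable fbar : R -> R -> R -> R.
Hypothesis Hpde : forall t Q K, 0 < t -> 0 < K ->
  exists dQ, differentiable_pt_lim (fun t' q => fbar t' q K) t Q (c_fun eps K * dQ) dQ.
Hypothesis Hcont : forall Q K, 0 < K ->
  filterlim (fun p : R * R => fbar (fst p) (snd p) K)
    (within (fun p : R * R => 0 <= fst p) (locally (0, Q))) (locally (fbar 0 Q K)).

Lemma transport t Q K : 0 <= t -> 0 < K -> fbar t Q K = fbar 0 (Q + c_fun eps K * t) K.
Proof.
  intros Ht HK. destruct (Req_dec t 0) as [E|E].
  { subst. rewrite Rmult_0_r, Rplus_0_r. auto. }
  assert (Htp : 0 < t) by lra.
  set (c := c_fun eps K).
  set (phi := fun s => fbar s (Q + c * (t - s)) K).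
  assert (Dphi : forall s, 0 < s -> derivable_pt_lim phi s 0).
  { intros s Hs. destruct (Hpde s (Q + c * (t - s)) K Hs HK) as [dQ HdQ].
    replace 0 with (c * dQ * 1 + dQ * (- c)) by ring.
    apply (derivable_pt_lim_comp_2d (fun t' q => fbar t' q K) (fun s => s) (fun s => Q + c * (t - s))).
    exact HdQ. apply derivable_pt_lim_id.
    apply is_derive_Reals. auto_derive; auto. ring. }
  assert (Const : forall s, 0 < s -> s <= t -> phi s = phi t).
  { intros s Hs Hst. destruct (Req_dec s t) as [->|Ne]; auto.
    destruct (MVT_cor2 phi (fun _ => 0) s t) as [x [Ex _]]. lra.
    intros x Hx. apply Dphi. lra. lra. }
  assert (Pt : phi t = fbar t Q K) by (unfold phi; rewrite Rminus_eq_0, Rmult_0_r, Rplus_0_r; auto).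
  set (L := fbar 0 (Q + c * t) K).
  destruct (Req_dec (fbar t Q K) L) as [EL|NL]; auto. exfalso.
  assert (He : 0 < Rabs (fbar t Q K - L) / 2) by (apply Rdiv_lt_0_compat; [apply Rabs_pos_lt; lra|lra]).
  pose proof (Hcont (Q + c * t) K HK) as Hc.
  assert (HB := Hc (ball L (mkposreal _ He)) (locally_ball L (mkposreal _ He))).
  unfold filtermap, within in HB.
  apply (locally_2d_locally (fun u v => 0 <= u -> ball L (mkposreal _ He) (fbar u v K))) in HB.
  destruct HB as [d Hd].
  set (s := Rmin t (Rmin (d / 2) (d / (2 * (Rabs c + 1))))).
  assert (Hd0 : 0 < d) by apply cond_pos.
  assert (Hc0 : 0 <= Rabs c) by apply Rabs_pos.
  assert (Hs : 0 < s) by (unfold s; repeat apply Rmin_pos; try lra; apply Rdiv_lt_0_compat; lra).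
  assert (Hst : s <= t) by apply Rmin_l.
  assert (Hs1 : s <= d / 2) by (unfold s; eapply Rle_trans; [apply Rmin_r|apply Rmin_l]).
  assert (Hs2 : s <= d / (2 * (Rabs c + 1))) by (unfold s; eapply Rle_trans; [apply Rmin_r|apply Rmin_r]).
  specialize (Hd s (Q + c * (t - s))).
  assert (B : ball L (mkposreal _ He) (phi s)).
  { apply Hd; [| |lra].
    - rewrite Rminus_0_r, Rabs_pos_eq; lra.
    - replace (Q + c * (t - s) - (Q + c * t)) with (- (c * s)) by ring.
      rewrite Rabs_Ropp, Rabs_mult, (Rabs_pos_eq s) by lra.
      apply Rle_lt_trans with (Rabs c * (d / (2 * (Rabs c + 1)))).
      apply Rmult_le_compat_l; lra.
      apply Rlt_le_trans with ((Rabs c + 1) * (d / (2 * (Rabs c + 1)))).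
      apply Rmult_lt_compat_r. apply Rdiv_lt_0_compat; lra. lra.
      replace ((Rabs c + 1) * (d / (2 * (Rabs c + 1)))) with (d / 2) by (field; lra). lra. }
  rewrite Const, Pt in B by auto. apply ball_R in B. simpl in B. lra.
Qed.

End Y.

Lemma bnd_prod a b A B : Rabs a <= A -> Rabs b <= B -> Rabs (a * b) <= A * B.
Proof. intros. rewrite Rabs_mult. apply Rmult_le_compat; auto using Rabs_pos. Qed.
Lemma bnd_sum a b A B : Rabs a <= A -> Rabs b <= B -> Rabs (a + b) <= A + B.
Proof. intros. eapply Rle_trans. apply Rabs_triang. lra. Qed.
Lemma bnd_opp a A : Rabs a <= A -> Rabs (- a) <= A.
Proof. rewrite Rabs_Ropp; auto. Qed.

Lemma rect_bound cs f : 0 < cs -> (forall x y, Upos x y -> continuity_2d_pt f x y) ->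
  exists B, 0 <= B /\ forall x y, 0 <= x <= 2 * PI -> cs <= y <= Rmax cs (/ cs) -> Rabs (f x y) <= B.
Proof.
  intros Hcs Hc. destruct (cont_bounded f 0 (2 * PI) cs (Rmax cs (/ cs))) as [B HB].
  - pose proof PI_RGT_0; lra.
  - apply Rmax_l.
  - intros x y _ Hy. apply Hc. unfold Upos. lra.
  - exists (Rabs B). split. apply Rabs_pos. intros x y Hx Hy. eapply Rle_trans. apply HB; auto. apply RRle_abs.
Qed.

Lemma Sm_Xc eps n : 0 < eps -> Sm n Upos (Xc eps).
Proof.
  intros Heps. unfold Xc. smt; unfold Upos; intros x y Hy; auto.
  all: try (pose proof (arg_pos eps Heps x y Hy); pose proof (sqrt_arg_ge1 eps Heps x y Hy); lra).
  all: try apply arg_pos; auto. all: apply sqrt_lt_R0; pose proof (sqrt_arg_ge1 eps Heps x y Hy); lra.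
Qed.

Lemma Sm_Vc n : Sm n Upos Vc.
Proof. unfold Vc. smt; unfold Upos; intros x y Hy; lra. Qed.

Lemma C2_bounds f0 M x v : C2sum f0 x v <= M ->
  Rabs (f0 x v) <= M /\ Rabs (dx f0 x v) <= M /\ Rabs (dv f0 x v) <= M /\
  Rabs (dx (dx f0) x v) <= M /\ Rabs (dx (dv f0) x v) <= M /\ Rabs (dv (dv f0) x v) <= M.
Proof.
  unfold C2sum. intros H.
  pose proof (Rabs_pos (f0 x v)). pose proof (Rabs_pos (dx f0 x v)). pose proof (Rabs_pos (dv f0 x v)).
  pose proof (Rabs_pos (dx (dx f0) x v)). pose proof (Rabs_pos (dx (dv f0) x v)). pose proof (Rabs_pos (dv (dv f0) x v)).
  repeat split; lra.
Qed.

Open Scope R_scope.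

Theorem lemma4p2 :
  forall eps cs : R, 0 < eps -> 0 < cs ->
  exists C : R, 0 < C /\
  forall (fbar : R -> R -> R -> R) (f0 : R -> R -> R),
    (forall t Q K, fbar t (Q + 2 * PI) K = fbar t Q K) ->
    (forall t Q K, 0 < t -> 0 < K ->
       exists dQ, differentiable_pt_lim (fun t' q => fbar t' q K) t Q (c_fun eps K * dQ) dQ) ->
    (forall Q K, 0 < K ->
       filterlim (fun p : R * R => fbar (fst p) (snd p) K)
         (within (fun p : R * R => 0 <= fst p) (locally (0, Q)))
         (locally (fbar 0 Q K))) ->
    (forall x v, (x, v) <> (0, 0) -> f0 x v = fbar 0 (Q_of eps x v) (K_of eps x v)) ->
    smooth2 f0 ->
    (forall x v, 0 <= f0 x v) ->
    (forall x v, f0 x v <> 0 -> cs <= Hen eps x v <= / cs) ->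
    forall M : R, (forall x v, C2sum f0 x v <= M) ->
    forall t Q K, 0 <= t -> cs <= K <= / cs ->
      Rabs (fbar t Q K) + Rabs (Yop eps fbar t Q K) + Rabs (Yop eps (Yop eps fbar) t Q K)
        <= C * M.
Proof.
  intros eps cs Heps Hcs.
  destruct (Sm_Qc eps Heps 2) as (Q1 & Q2 & HQd & HQ1 & HQ2).
  destruct (Sm_Xc eps 2 Heps) as (X1 & X2 & HXd & HX1 & HX2).
  destruct (Sm_Vc 2) as (V1 & V2 & HVd & HV1 & HV2).
  assert (HQ1p : forall x y, Upos x y -> 0 < Q1 x y) by (intros; apply (Q1_pos eps Heps Q1 Q2 HQd); auto).
  assert (Hrho : Sm 1 Upos (rho Q1 Q2)) by (unfold rho; apply Sm_mult; auto; apply Sm_inv; auto).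
  assert (Hal : Sm 1 Upos (al Q1 Q2 X1 X2)) by (unfold al; apply Sm_minus; auto; apply Sm_mult; auto).
  assert (Hbe : Sm 1 Upos (be Q1 Q2 V1 V2)) by (unfold be; apply Sm_minus; auto; apply Sm_mult; auto).
  pose proof (Sm_cont 1 _ _ Hal) as Cal. pose proof (Sm_cont 1 _ _ Hbe) as Cbe.
  pose proof (Sm_cont 1 _ _ Hrho) as Crho.
  pose proof (Sm_cont 1 _ _ HX1) as CX1. pose proof (Sm_cont 1 _ _ HX2) as CX2.
  pose proof (Sm_cont 1 _ _ HV1) as CV1. pose proof (Sm_cont 1 _ _ HV2) as CV2.
  destruct Hal as (al1 & al2 & Hald & Hal1 & Hal2).
  destruct Hbe as (be1 & be2 & Hbed & Hbe1 & Hbe2).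
  destruct (rect_bound cs _ Hcs Cal) as [b1 [b1p Hb1]].
  destruct (rect_bound cs _ Hcs Cbe) as [b2 [b2p Hb2]].
  destruct (rect_bound cs _ Hcs Crho) as [b3 [b3p Hb3]].
  destruct (rect_bound cs _ Hcs CX1) as [b4 [b4p Hb4]].
  destruct (rect_bound cs _ Hcs CX2) as [b5 [b5p Hb5]].
  destruct (rect_bound cs _ Hcs CV1) as [b6 [b6p Hb6]].
  destruct (rect_bound cs _ Hcs CV2) as [b7 [b7p Hb7]].
  destruct (rect_bound cs _ Hcs Hal1) as [b8 [b8p Hb8]].
  destruct (rect_bound cs _ Hcs Hal2) as [b9 [b9p Hb9]].
  destruct (rect_bound cs _ Hcs Hbe1) as [b10 [b10p Hb10]].
  destruct (rect_bound cs _ Hcs Hbe2) as [b11 [b11p Hb11]].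
  set (B0 := b1 + b2 + b3 + b4 + b5 + b6 + b7 + b8 + b9 + b10 + b11).
  assert (HB0 : 0 <= B0) by (unfold B0; lra).
  assert (Hcd : forall K, 0 < K -> ex_derive (c_fun eps) K).
  { destruct (Sm_cc2 eps Heps 1) as (c1 & c2 & Dc & _ & _).
    intros K HK. exists (c2 0 K).
    apply is_derive_ext_loc with (f := fun z => cc eps z).
    - apply filter_imp with (2 := locally_pos K HK). intros; rewrite c_fun_cc; auto.
    - apply (dpl_d2 (fun _ H => cc eps H) 0 K (c1 0 K)). apply Dc. exact HK. }
  exists (1 + 2 * B0 + (4 * B0 ^ 2 + 2 * B0) * (B0 + 1)). split.
  { assert (0 <= (4 * B0 ^ 2 + 2 * B0) * (B0 + 1)) by (apply Rmult_le_pos; nra). lra. }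
  intros fbar f0 Hper Hpde Hcont Hinit Hsm Hnn Hsupp M HM t Q K Ht HKr.
  assert (HK : 0 < K) by lra.
  set (Qp := Q + c_fun eps K * t).
  assert (E0 : fbar t Q K = Pc eps f0 nil (chiQ eps Qp K) K).
  { rewrite (transport eps fbar Hpde Hcont t Q K Ht HK). apply (g_rep eps Heps f0 fbar Hper Hinit); auto. }
  pose proof (Dg eps Heps Q1 Q2 X1 X2 V1 V2 HQd HXd HVd f0 Hsm fbar Hper Hinit) as Dg'.
  pose proof (DgK eps Heps Q1 Q2 X1 X2 V1 V2 HQd HXd HVd al1 al2 be1 be2 Hald Hbed f0 Hsm) as DgK'.
  set (gk := gK eps Q1 Q2 X1 X2 V1 V2 f0) in *.
  set (gkk := gKK eps Q1 Q2 X1 X2 V1 V2 al1 al2 be1 be2 f0) in *.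
  assert (Y1 : forall q k, 0 < k -> Yop eps fbar t q k = (-1) * gk (q + c_fun eps k * t) k).
  { intros q k Hk. transitivity (- gk (q + c_fun eps k * t) k); [|ring].
    eapply (Yop_formula eps fbar (fun q k => fbar 0 q k)). exact Hk. apply Hcd; auto.
    intros; apply transport; auto. apply Dg'. auto. }
  assert (Y2 : Yop eps (Yop eps fbar) t Q K = gkk Qp K).
  { transitivity (- (gk Qp K * 0 + (-1) * gkk Qp K)); [|ring].
    eapply (Yop_formula eps (Yop eps fbar) (fun q k => (-1) * gk q k)). exact HK. apply Hcd; auto.
    intros q k Hk; apply Y1; auto.
    apply (dpl_mult2 (fun _ _ => -1) gk). apply dpl_const. apply DgK'. auto. }
  assert (gk_D : forall q k, 0 < k -> gk q k = Derive (fun y => fbar 0 q y) k).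
  { intros q k Hk. symmetry. apply (differentiable_pt_lim_unique _ _ _ _ _ (Dg' q k Hk)). }
  assert (gk_per : forall q k (m : Z), 0 < k -> gk (q + 2 * PI * IZR m) k = gk q k).
  { intros q k m Hk. rewrite !gk_D by auto. apply Derive_ext. intros y. apply fbar_perZ; auto. }
  assert (gkk_D : forall q k, 0 < k -> gkk q k = Derive (fun y => gk q y) k).
  { intros q k Hk. symmetry. apply (differentiable_pt_lim_unique _ _ _ _ _ (DgK' q k Hk)). }
  assert (gkk_per : forall q k (m : Z), 0 < k -> gkk (q + 2 * PI * IZR m) k = gkk q k).
  { intros q k m Hk. rewrite !gkk_D by auto. apply Derive_ext_loc.
    apply filter_imp with (2 := locally_pos k Hk). intros y Hy. apply gk_per; auto. }
  assert (Bnd : forall q, Rabs (gk q K) <= 2 * B0 * M /\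
                          Rabs (gkk q K) <= (4 * B0 ^ 2 + 2 * B0) * (B0 + 1) * M).
  { intros q. set (n := Int_part (q / (2 * PI))). set (q0 := q + 2 * PI * IZR (- n)).
    assert (Hpi : 0 < 2 * PI) by (pose proof PI_RGT_0; lra).
    destruct (base_Int_part (q / (2 * PI))) as [B1 B2]. fold n in B1, B2.
    assert (Hq0 : 0 <= q0 <= 2 * PI).
    { unfold q0. rewrite opp_IZR.
      assert (q = 2 * PI * (q / (2 * PI))) by (field; lra).
      split.
      - assert (2 * PI * IZR n <= 2 * PI * (q / (2 * PI))) by (apply Rmult_le_compat_l; lra). lra.
      - assert (2 * PI * (q / (2 * PI)) <= 2 * PI * (IZR n + 1)) by (apply Rmult_le_compat_l; lra). lra. }
    assert (Eq : q = q0 + 2 * PI * IZR n) by (unfold q0; rewrite opp_IZR; ring).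
    rewrite Eq, gk_per, gkk_per by auto.
    set (c0 := chiQ eps q0 K).
    assert (Hc0 : 0 <= c0 <= 2 * PI) by (apply chiQ_range; auto).
    assert (HKr' : cs <= K <= Rmax cs (/ cs)) by (split; [lra|eapply Rle_trans; [apply HKr|apply Rmax_r]]).
    assert (HMb := C2_bounds f0 M (Xc eps c0 K) (Vc c0 K) (HM _ _)).
    destruct HMb as (M0 & Mx & Mv & Mxx & Mxv & Mvv).
    assert (Pxx : Rabs (Pc eps f0 (true :: true :: nil) c0 K) <= M) by (unfold Pc; simpl; auto).
    assert (Pvx : Rabs (Pc eps f0 (false :: true :: nil) c0 K) <= M) by (unfold Pc; simpl; rewrite schwarz_f0; auto).
    assert (Pxv : Rabs (Pc eps f0 (true :: false :: nil) c0 K) <= M) by (unfold Pc; simpl; auto).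
    assert (Pvv : Rabs (Pc eps f0 (false :: false :: nil) c0 K) <= M) by (unfold Pc; simpl; auto).
    assert (Px : Rabs (Pc eps f0 (true :: nil) c0 K) <= M) by (unfold Pc; simpl; auto).
    assert (Pv : Rabs (Pc eps f0 (false :: nil) c0 K) <= M) by (unfold Pc; simpl; auto).
    assert (Bal : Rabs (al Q1 Q2 X1 X2 c0 K) <= B0) by (eapply Rle_trans; [apply Hb1; auto|unfold B0; lra]).
    assert (Bbe : Rabs (be Q1 Q2 V1 V2 c0 K) <= B0) by (eapply Rle_trans; [apply Hb2; auto|unfold B0; lra]).
    assert (Brho : Rabs (rho Q1 Q2 c0 K) <= B0) by (eapply Rle_trans; [apply Hb3; auto|unfold B0; lra]).
    assert (BX1 : Rabs (X1 c0 K) <= B0) by (eapply Rle_trans; [apply Hb4; auto|unfold B0; lra]).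
    assert (BX2 : Rabs (X2 c0 K) <= B0) by (eapply Rle_trans; [apply Hb5; auto|unfold B0; lra]).
    assert (BV1 : Rabs (V1 c0 K) <= B0) by (eapply Rle_trans; [apply Hb6; auto|unfold B0; lra]).
    assert (BV2 : Rabs (V2 c0 K) <= B0) by (eapply Rle_trans; [apply Hb7; auto|unfold B0; lra]).
    assert (Bal1 : Rabs (al1 c0 K) <= B0) by (eapply Rle_trans; [apply Hb8; auto|unfold B0; lra]).
    assert (Bal2 : Rabs (al2 c0 K) <= B0) by (eapply Rle_trans; [apply Hb9; auto|unfold B0; lra]).
    assert (Bbe1 : Rabs (be1 c0 K) <= B0) by (eapply Rle_trans; [apply Hb10; auto|unfold B0; lra]).
    assert (Bbe2 : Rabs (be2 c0 K) <= B0) by (eapply Rle_trans; [apply Hb11; auto|unfold B0; lra]).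
    assert (M0p : 0 <= M) by (eapply Rle_trans; [apply Rabs_pos|exact M0]).
    split.
    - unfold gk, gK, Gf. fold c0.
      apply Rle_trans with (M * B0 + M * B0). apply bnd_sum; apply bnd_prod; auto. lra.
    - unfold gkk, gKK. fold c0.
      assert (BG1 : Rabs (G1 eps Q1 Q2 X1 X2 V1 V2 al1 be1 f0 c0 K) <=
        B0 * (M * B0 + M * B0) + M * B0 + (B0 * (M * B0 + M * B0) + M * B0)).
      { unfold G1. set (aa := al Q1 Q2 X1 X2 c0 K) in *. set (bb := be Q1 Q2 V1 V2 c0 K) in *. clearbody aa bb B0.
        repeat first [apply bnd_sum | apply bnd_prod]; auto. }
      assert (BG2 : Rabs (G2 eps Q1 Q2 X1 X2 V1 V2 al2 be2 f0 c0 K) <=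
        B0 * (M * B0 + M * B0) + M * B0 + (B0 * (M * B0 + M * B0) + M * B0)).
      { unfold G2. set (aa := al Q1 Q2 X1 X2 c0 K) in *. set (bb := be Q1 Q2 V1 V2 c0 K) in *. clearbody aa bb B0.
        repeat first [apply bnd_sum | apply bnd_prod]; auto. }
      assert (Brho' : Rabs (- (Q2 c0 K / Q1 c0 K)) <= B0) by (rewrite Rabs_Ropp; exact Brho).
      apply Rle_trans with ((B0 * (M * B0 + M * B0) + M * B0 + (B0 * (M * B0 + M * B0) + M * B0)) * B0 +
                            (B0 * (M * B0 + M * B0) + M * B0 + (B0 * (M * B0 + M * B0) + M * B0)) * 1).
      apply bnd_sum; apply bnd_prod; auto. rewrite Rabs_R1; lra.
      right. ring. }
  rewrite E0, Y1, Y2 by auto. fold Qp.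
  destruct (Bnd Qp) as [Bk Bkk].
  assert (Pn : Rabs (Pc eps f0 nil (chiQ eps Qp K) K) <= M).
  { unfold Pc. simpl. apply (C2_bounds f0 M _ _ (HM _ _)). }
  rewrite Rabs_mult. replace (Rabs (-1)) with 1 by (rewrite Rabs_left; lra). rewrite Rmult_1_l.
  assert (E : (1 + 2 * B0 + (4 * B0 ^ 2 + 2 * B0) * (B0 + 1)) * M =
              M + 2 * B0 * M + (4 * B0 ^ 2 + 2 * B0) * (B0 + 1) * M) by ring.
  rewrite E. lra.
Qed.
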